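(* For every $A>0$ and $f\in\mathcal F$, $$\partial^2_{xx}E_f\!\left(\tfrac12,\tfrac{\sqrt3}{2},A\right)=\partial^2_{yy}E_f\!\left(\tfrac12,\tfrac{\sqrt3}{2},A\right)=T_f(A),$$ where $$T_f(A):=\frac{4A}{\sqrt3}\sum_{m,n}n^2f'\!\left(\frac{2A}{\sqrt3}[m^2+mn+n^2]\right)+\frac{4A^2}{3}\sum_{m,n}n^4f''\!\left(\frac{2A}{\sqrt3}[m^2+mn+n^2]\right),$$ and $\partial^2_{xy}E_f\!\left(\tfrac12,\tfrac{\sqrt3}{2},A\right)=\partial^2_{yx}E_f\!\left(\tfrac12,\tfrac{\sqrt3}{2},A\right)=0$. Consequently, if $T_f(A)>0$ then $(1/2,\sqrt3/2)$ is a strict local minimizer of $(x,y)\mapsto E_f(x,y,A)$, and if $T_f(A)<0$ it is a strict local maximizer.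
   Context: $\mathcal F$ is the set of $f\in C^2((0,\infty))$ such that for each $k\in\{0,1,2\}$ there is $\eta_k>1$ with $|f^{(k)}(r)|=O(r^{-\eta_k-k})$ as $r\to\infty$. For $f\in\mathcal F$, $A>0$, $x\in\mathbb R$, $y>0$, $E_f(x,y,A)=\sum_{m,n} f\left(A\left[\frac1y(m+xn)^2+yn^2\right]\right)$, where $\sum_{m,n}$ denotes summation over all $(m,n)\in\mathbb Z^2\setminus\{(0,0)\}$. *)

(* Defs.v *)
From Stdlib Require Import Reals ZArith ClassicalEpsilon.
Open Scope R_scope.

(* Summation over the punctured lattice Z^2 \ {(0,0)}.
   Partial sums over the square [-N,N]^2 (origin removed). *)
Definition sq_sum (F : Z -> Z -> R) (N : nat) : R :=
  sum_f_R0 (fun i =>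
    sum_f_R0 (fun j =>
      let m := (Z.of_nat i - Z.of_nat N)%Z in
      let n := (Z.of_nat j - Z.of_nat N)%Z in
      if andb (Z.eqb m 0) (Z.eqb n 0) then 0 else F m n) (2 * N)) (2 * N).

(* The lattice sum: the limit of the square partial sums (for the absolutely
   convergent sums of the paper this is the sum).  Chosen by epsilon. *)
Definition lattice_sum (F : Z -> Z -> R) : R :=
  epsilon (inhabits 0) (fun l => Un_cv (sq_sum F) l).

Definition decay (g : R -> R) (k : R) : Prop :=
  exists eta, 1 < eta /\ exists C R0, 0 < R0 /\
    forall r, R0 <= r -> Rabs (g r) <= C * Rpower r (- (eta + k)).

Definition in_F (f f1 f2 : R -> R) : Prop :=
  (forall r, 0 < r -> derivable_pt_lim f r (f1 r)) /\
  (forall r, 0 < r -> derivable_pt_lim f1 r (f2 r)) /\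
  (forall r, 0 < r -> continuity_pt f2 r) /\
  decay f 0 /\ decay f1 1 /\ decay f2 2.

Definition E_f (f : R -> R) (x y A : R) : R :=
  lattice_sum (fun m n =>
    f (A * (/ y * (IZR m + x * IZR n) ^ 2 + y * IZR n ^ 2))).

Definition T_f (f1 f2 : R -> R) (A : R) : R :=
  4 * A / sqrt 3 *
    lattice_sum (fun m n => IZR n ^ 2 *
      f1 (2 * A / sqrt 3 * (IZR m ^ 2 + IZR m * IZR n + IZR n ^ 2)))
  + 4 * A ^ 2 / 3 *
    lattice_sum (fun m n => IZR n ^ 4 *
      f2 (2 * A / sqrt 3 * (IZR m ^ 2 + IZR m * IZR n + IZR n ^ 2))).

Definition strict_local_min (g : R -> R -> R) (x0 y0 : R) : Prop :=
  exists d, 0 < d /\ forall x y, Rabs (x - x0) < d -> Rabs (y - y0) < d ->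
    0 < y -> (x, y) <> (x0, y0) -> g x0 y0 < g x y.

Definition strict_local_max (g : R -> R -> R) (x0 y0 : R) : Prop :=
  exists d, 0 < d /\ forall x y, Rabs (x - x0) < d -> Rabs (y - y0) < d ->
    0 < y -> (x, y) <> (x0, y0) -> g x y < g x0 y0.

(* Main.v *)
Require Import Defs.
From Stdlib Require Import Reals ZArith Lra Lia Psatz Nsatz ClassicalEpsilon FunctionalExtensionality.
Open Scope R_scope.

Lemma Rpower_pos x y : 0 < Rpower x y.
Proof. unfold Rpower; apply exp_pos. Qed.

Lemma Rpower_decr x y s : 0 <= s -> 0 < x <= y -> Rpower y (- s) <= Rpower x (- s).
Proof.
  intros Hs Hxy. rewrite !Rpower_Ropp.
  apply Rinv_le_contravar. apply Rpower_pos. apply Rle_Rpower_l; lra.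
Qed.

Lemma tele (s k : R) : 0 < s -> 1 <= k - 1 ->
  Rpower k (- (1 + s)) <= (Rpower (k - 1) (- s) - Rpower k (- s)) / s.
Proof.
  intros Hs Hk.
  destruct (MVT_cor2 (fun t => Rpower t (- s)) (fun t => - s * Rpower t (- s - 1)) (k - 1) k)
    as [c [Hc1 Hc2]]; [lra| |].
  { intros c Hc. apply derivable_pt_lim_power. lra. }
  assert (Rpower k (-(1+s)) <= Rpower c (-(1+s))).
  { apply Rpower_decr; lra. }
  replace (- s - 1) with (-(1+s)) in Hc1 by ring.
  apply (Rmult_le_reg_l s); [lra|].
  replace (s * ((Rpower (k - 1) (- s) - Rpower k (- s)) / s)) with
     (-(Rpower k (- s) - Rpower (k - 1) (- s))) by (field; lra).
  rewrite Hc1. nra.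
Qed.

Lemma tail_sum (a : nat -> R) (D s : R) (K : nat) :
  0 <= D -> 0 < s -> (1 <= K)%nat ->
  (forall N, (K <= N)%nat -> Rabs (a (S N) - a N) <= D * Rpower (INR (S N)) (- (1 + s))) ->
  forall N t, (K <= N)%nat ->
  Rabs (a (N + t)%nat - a N) <= D * (Rpower (INR N) (- s) - Rpower (INR (N + t)) (- s)) / s.
Proof.
  intros HD Hs HK Hinc N t HN. induction t.
  - rewrite Nat.add_0_r. unfold Rminus. rewrite !Rplus_opp_r, Rabs_R0.
    unfold Rdiv; rewrite Rmult_0_r, Rmult_0_l; lra.
  - replace (N + S t)%nat with (S (N + t)) by lia.
    assert (H1 := Hinc (N + t)%nat ltac:(lia)).
    assert (H2 := tele s (INR (S (N + t))) Hs).
    rewrite S_INR in H2. replace (INR (N + t) + 1 - 1) with (INR (N+t)) in H2 by ring.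
    assert (1 <= INR (N + t)). { replace 1 with (INR 1) by reflexivity. apply le_INR. lia. }
    specialize (H2 H). rewrite <- S_INR in H2.
    replace (a (S (N + t)) - a N) with ((a (S (N+t)) - a (N+t)%nat) + (a (N+t)%nat - a N)) by ring.
    eapply Rle_trans; [apply Rabs_triang|].
    apply Rle_trans with (D * ((Rpower (INR (N + t)) (- s) - Rpower (INR (S (N + t))) (- s)) / s)
       + D * (Rpower (INR N) (- s) - Rpower (INR (N + t)) (- s)) / s).
    + apply Rplus_le_compat; [|exact IHt].
      eapply Rle_trans; [exact H1|]. apply Rmult_le_compat_l; assumption.
    + right. field. lra.
Qed.

Lemma Rpower_small (s eps : R) : 0 < s -> 0 < eps ->
  exists X, 0 < X /\ forall x, X <= x -> Rpower x (- s) < eps.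
Proof.
  intros Hs He. exists (exp (- ln eps / s) + 1). split.
  { assert (0 < exp (- ln eps / s)) by apply exp_pos. lra. }
  intros x Hx. assert (Hx0 : 0 < x). { assert (0 < exp (- ln eps / s)) by apply exp_pos. lra. }
  unfold Rpower. rewrite <- (exp_ln eps He). apply exp_increasing.
  assert (ln (exp (- ln eps / s)) < ln x).
  { apply ln_increasing. apply exp_pos. lra. }
  rewrite ln_exp in H.
  apply (Rmult_lt_compat_l s) in H; [|lra].
  replace (s * (- ln eps / s)) with (- ln eps) in H by (field; lra). nra.
Qed.

Lemma Rpower_small_nat (s eps : R) : 0 < s -> 0 < eps ->
  exists N0, forall N, (N0 <= N)%nat -> Rpower (INR N) (- s) < eps.
Proof.
  intros Hs He. destruct (Rpower_small s eps Hs He) as [X [HX HXs]].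
  destruct (INR_unbounded X) as [N0 HN0]. exists N0. intros N HN.
  apply HXs. apply le_INR in HN. lra.
Qed.

Definition zs (g : Z -> R) (N : nat) : R :=
  sum_f_R0 (fun i => g (Z.of_nat i - Z.of_nat N)%Z) (2 * N).

Definition Gz (F : Z -> Z -> R) (m n : Z) : R :=
  if andb (Z.eqb m 0) (Z.eqb n 0) then 0 else F m n.

Lemma sq_sum_zs F N : sq_sum F N = zs (fun m => zs (fun n => Gz F m n) N) N.
Proof. reflexivity. Qed.

Lemma sum_shift1 (a : nat -> R) M : sum_f_R0 a (S M) = a 0%nat + sum_f_R0 (fun i => a (S i)) M.
Proof. rewrite decomp_sum by lia. reflexivity. Qed.

Lemma zs_S g N : zs g (S N) = zs g N + g (Z.of_nat (S N)) + g (- Z.of_nat (S N))%Z.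
Proof.
  unfold zs. replace (2 * S N)%nat with (S (S (2 * N))) by lia.
  rewrite sum_shift1, tech5.
  replace (g (Z.of_nat 0 - Z.of_nat (S N))%Z) with (g (- Z.of_nat (S N))%Z) by (f_equal; lia).
  replace (g (Z.of_nat (S (S (2 * N))) - Z.of_nat (S N))%Z) with (g (Z.of_nat (S N))) by (f_equal; lia).
  rewrite (sum_eq _ (fun i => g (Z.of_nat i - Z.of_nat N)%Z)).
  2:{ intros i _. f_equal. lia. }
  ring.
Qed.

Lemma zs_plus a b N : zs (fun z => a z + b z) N = zs a N + zs b N.
Proof. unfold zs. apply sum_plus. Qed.

Lemma zs_minus a b N : zs (fun z => a z - b z) N = zs a N - zs b N.
Proof. unfold zs. apply minus_sum. Qed.

Lemma zs_scal c a N : zs (fun z => c * a z) N = c * zs a N.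
Proof. unfold zs. rewrite scal_sum. apply sum_eq. intros; ring. Qed.

Lemma zs_ext a b N : (forall z, (- Z.of_nat N <= z <= Z.of_nat N)%Z -> a z = b z) ->
  zs a N = zs b N.
Proof. intros H. unfold zs. apply sum_eq. intros i Hi. apply H. lia. Qed.

Lemma zs_bound g N B : (forall z, (- Z.of_nat N <= z <= Z.of_nat N)%Z -> Rabs (g z) <= B) ->
  Rabs (zs g N) <= (2 * INR N + 1) * B.
Proof.
  intros H. unfold zs. eapply Rle_trans; [apply Rsum_abs|].
  eapply Rle_trans. apply (sum_Rle _ (fun _ => B)). intros i Hi. apply H. lia.
  rewrite sum_cte. right. rewrite S_INR, mult_INR. simpl (INR 2). ring.
Qed.

Definition kmax (m n : Z) : R := Rmax (Rabs (IZR m)) (Rabs (IZR n)).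

Lemma kmax_ge_l m n : Rabs (IZR m) <= kmax m n.
Proof. apply Rmax_l. Qed.
Lemma kmax_ge_r m n : Rabs (IZR n) <= kmax m n.
Proof. apply Rmax_r. Qed.

Lemma IZR_of_nat k : IZR (Z.of_nat k) = INR k.
Proof. rewrite INR_IZR_INZ. reflexivity. Qed.

Lemma Rabs_IZR_of_nat k : Rabs (IZR (Z.of_nat k)) = INR k.
Proof. rewrite IZR_of_nat. apply Rabs_pos_eq, pos_INR. Qed.

Lemma Rabs_IZR_opp_of_nat k : Rabs (IZR (- Z.of_nat k)) = INR k.
Proof. rewrite opp_IZR, Rabs_Ropp. apply Rabs_IZR_of_nat. Qed.

Lemma sq_inc F N B :
  (forall m n, INR (S N) <= kmax m n -> Rabs (Gz F m n) <= B) ->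
  Rabs (sq_sum F (S N) - sq_sum F N) <= (8 * INR N + 8) * B.
Proof.
  intros H. rewrite !sq_sum_zs.
  rewrite (zs_ext (fun m => zs (fun n => Gz F m n) (S N))
     (fun m => zs (fun n => Gz F m n) N + (Gz F m (Z.of_nat (S N)) + Gz F m (- Z.of_nat (S N))%Z))).
  2:{ intros z _. rewrite zs_S. ring. }
  rewrite (zs_S (fun m => zs (fun n : Z => Gz F m n) N + (Gz F m (Z.of_nat (S N)) + Gz F m (- Z.of_nat (S N))))).
  rewrite (zs_plus (fun m => zs (fun n : Z => Gz F m n) N)).
  rewrite (zs_plus (fun m => Gz F m (Z.of_nat (S N)))).
  set (a1 := zs (fun m => Gz F m (Z.of_nat (S N))) N).
  set (a2 := zs (fun m => Gz F m (- Z.of_nat (S N))%Z) N).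
  set (r1 := zs (fun n => Gz F (Z.of_nat (S N)) n) N).
  set (r2 := zs (fun n => Gz F (- Z.of_nat (S N))%Z n) N).
  assert (Ha1 : Rabs a1 <= (2 * INR N + 1) * B).
  { apply zs_bound. intros z _. apply H. rewrite <- Rabs_IZR_of_nat. apply kmax_ge_r. }
  assert (Ha2 : Rabs a2 <= (2 * INR N + 1) * B).
  { apply zs_bound. intros z _. apply H. rewrite <- (Rabs_IZR_opp_of_nat (S N)). apply kmax_ge_r. }
  assert (Hr1 : Rabs r1 <= (2 * INR N + 1) * B).
  { apply zs_bound. intros z _. apply H. rewrite <- Rabs_IZR_of_nat. apply kmax_ge_l. }
  assert (Hr2 : Rabs r2 <= (2 * INR N + 1) * B).
  { apply zs_bound. intros z _. apply H. rewrite <- (Rabs_IZR_opp_of_nat (S N)). apply kmax_ge_l. }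
  assert (H1 : Rabs (Gz F (Z.of_nat (S N)) (Z.of_nat (S N))) <= B).
  { apply H. rewrite <- Rabs_IZR_of_nat. apply kmax_ge_l. }
  assert (H2 : Rabs (Gz F (Z.of_nat (S N)) (- Z.of_nat (S N))%Z) <= B).
  { apply H. rewrite <- Rabs_IZR_of_nat. apply kmax_ge_l. }
  assert (H3 : Rabs (Gz F (- Z.of_nat (S N))%Z (Z.of_nat (S N))) <= B).
  { apply H. rewrite <- (Rabs_IZR_opp_of_nat (S N)). apply kmax_ge_l. }
  assert (H4 : Rabs (Gz F (- Z.of_nat (S N))%Z (- Z.of_nat (S N))%Z) <= B).
  { apply H. rewrite <- (Rabs_IZR_opp_of_nat (S N)). apply kmax_ge_l. }
  set (c1 := Gz F (Z.of_nat (S N)) (Z.of_nat (S N))) in *.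
  set (c2 := Gz F (Z.of_nat (S N)) (- Z.of_nat (S N))%Z) in *.
  set (c3 := Gz F (- Z.of_nat (S N))%Z (Z.of_nat (S N))) in *.
  set (c4 := Gz F (- Z.of_nat (S N))%Z (- Z.of_nat (S N))%Z) in *.
  set (z0 := zs (fun m => zs (fun n => Gz F m n) N) N).
  replace (z0 + (a1 + a2) + (r1 + (c1 + c2)) + (r2 + (c3 + c4)) - z0)
    with (a1 + a2 + r1 + r2 + (c1 + c2 + c3 + c4)) by ring.
  assert (Hb : 0 <= B) by (eapply Rle_trans; [apply Rabs_pos|exact H1]).
  pose proof (Rabs_triang (a1 + a2 + r1 + r2) (c1 + c2 + c3 + c4)).
  pose proof (Rabs_triang (a1 + a2 + r1) r2).
  pose proof (Rabs_triang (a1 + a2) r1).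
  pose proof (Rabs_triang a1 a2).
  pose proof (Rabs_triang (c1 + c2 + c3) c4).
  pose proof (Rabs_triang (c1 + c2) c3).
  pose proof (Rabs_triang c1 c2).
  lra.
Qed.

Definition bnd (F : Z -> Z -> R) (K : nat) (C p : R) : Prop :=
  forall m n, INR K <= kmax m n -> Rabs (F m n) <= C * Rpower (kmax m n) (- p).

Lemma Gz_far F m n : 0 < kmax m n -> Gz F m n = F m n.
Proof.
  intros H. unfold Gz. destruct (Z.eqb_spec m 0), (Z.eqb_spec n 0); simpl; auto.
  subst. unfold kmax in H. rewrite Rabs_R0, Rmax_left in H; lra.
Qed.

Lemma le_eps x y : (forall e, 0 < e -> x <= y + e) -> x <= y.
Proof.
  intros H. destruct (Rle_or_lt x y); auto.
  specialize (H ((x - y)/2) ltac:(lra)). lra.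
Qed.

Lemma INR_ge1 K : (1 <= K)%nat -> 1 <= INR K.
Proof. intros. replace 1 with (INR 1) by reflexivity. apply le_INR; lia. Qed.

Lemma bnd_inc F K C p N : bnd F K C p -> (1 <= K)%nat -> 0 <= C -> 2 < p -> (K <= N)%nat ->
  Rabs (sq_sum F (S N) - sq_sum F N) <= (8 * C) * Rpower (INR (S N)) (- (1 + (p - 2))).
Proof.
  intros Hb HK HC Hp HN.
  assert (HSN : 1 <= INR (S N)) by (apply INR_ge1; lia).
  eapply Rle_trans. apply (sq_inc F N (C * Rpower (INR (S N)) (- p))).
  - intros m n Hk. rewrite Gz_far by lra.
    eapply Rle_trans. apply Hb. eapply Rle_trans; [|exact Hk]. apply le_INR; lia.
    apply Rmult_le_compat_l; auto. apply Rpower_decr; lra.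
  - replace (- (1 + (p - 2))) with (1 + - p) by ring.
    rewrite Rpower_plus, Rpower_1 by lra. rewrite S_INR. right; ring.
Qed.

Lemma bnd_tail F K C p : bnd F K C p -> (1 <= K)%nat -> 0 <= C -> 2 < p ->
  forall N t, (K <= N)%nat ->
  Rabs (sq_sum F (N + t) - sq_sum F N) <= 8 * C * Rpower (INR N) (- (p - 2)) / (p - 2).
Proof.
  intros Hb HK HC Hp N t HN.
  eapply Rle_trans. apply (tail_sum (sq_sum F) (8 * C) (p - 2) K); try lra; auto.
  intros; apply (bnd_inc F K C p); auto.
  unfold Rdiv. apply Rmult_le_compat_r. apply Rlt_le, Rinv_0_lt_compat; lra.
  apply Rmult_le_compat_l. lra. pose proof (Rpower_pos (INR (N + t)) (- (p - 2))). lra.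
Qed.

Lemma bnd_cv F K C p : bnd F K C p -> (1 <= K)%nat -> 0 <= C -> 2 < p ->
  exists l, Un_cv (sq_sum F) l /\ forall N, (K <= N)%nat -> Rabs (l - sq_sum F N) <= 8 * C * Rpower (INR N) (- (p - 2)) / (p - 2).
Proof.
  intros Hb HK HC Hp.
  assert (Htl := bnd_tail F K C p Hb HK HC Hp).
  assert (Hsmall : forall e, 0 < e -> exists N0, (K <= N0)%nat /\ forall N, (N0 <= N)%nat -> 8 * C * Rpower (INR N) (- (p - 2)) / (p - 2) < e).
  { intros e He. destruct (Rpower_small_nat (p - 2) (e * (p - 2) / (8 * C + 1))) as [N0 HN0]; [lra| |].
    { apply Rdiv_lt_0_compat; nra. }
    exists (max N0 K). split; [lia|]. intros N HN. specialize (HN0 N ltac:(lia)).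
    apply (Rmult_lt_compat_l (8 * C + 1)) in HN0; [|lra].
    replace ((8 * C + 1) * (e * (p - 2) / (8 * C + 1))) with (e * (p - 2)) in HN0 by (field; lra).
    pose proof (Rpower_pos (INR N) (- (p - 2))).
    apply (Rmult_lt_reg_r (p - 2)); [lra|]. unfold Rdiv. rewrite Rmult_assoc, Rinv_l, Rmult_1_r by lra.
    nra. }
  assert (Hc : Cauchy_crit (sq_sum F)).
  { intros e He. destruct (Hsmall (e / 2) ltac:(lra)) as [N0 [HKN0 HN0]]. exists N0.
    intros n m Hn Hm. unfold Rdist.
    pose proof (Htl N0 (n - N0)%nat HKN0). pose proof (Htl N0 (m - N0)%nat HKN0).
    replace (N0 + (n - N0))%nat with n in H by lia.
    replace (N0 + (m - N0))%nat with m in H0 by lia.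
    specialize (HN0 N0 (le_n _)).
    replace (sq_sum F n - sq_sum F m) with ((sq_sum F n - sq_sum F N0) - (sq_sum F m - sq_sum F N0)) by ring.
    eapply Rle_lt_trans; [apply Rabs_triang|]. rewrite Rabs_Ropp. lra. }
  destruct (R_complete _ Hc) as [l Hl]. exists l. split; auto.
  intros N HN. apply le_eps. intros e He.
  destruct (Hl e He) as [M HM]. specialize (HM (N + M)%nat ltac:(lia)). unfold Rdist in HM.
  specialize (Htl N M HN).
  replace (l - sq_sum F N) with (-(sq_sum F (N + M) - l) + (sq_sum F (N + M) - sq_sum F N)) by ring.
  eapply Rle_trans; [apply Rabs_triang|]. rewrite Rabs_Ropp. lra.
Qed.

Definition cv (F : Z -> Z -> R) : Prop := exists l : R, Un_cv (sq_sum F) l.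

Lemma lattice_sum_spec F : cv F -> Un_cv (sq_sum F) (lattice_sum F).
Proof. intros H. unfold lattice_sum. apply epsilon_spec. exact H. Qed.

Lemma lattice_sum_eq F l : Un_cv (sq_sum F) l -> lattice_sum F = l.
Proof.
  intros H. apply (UL_sequence (sq_sum F)); auto. apply lattice_sum_spec. exists l; auto.
Qed.

Lemma bnd_cv2 F K C p : bnd F K C p -> (1 <= K)%nat -> 0 <= C -> 2 < p ->
  cv F /\ forall N, (K <= N)%nat ->
    Rabs (lattice_sum F - sq_sum F N) <= 8 * C * Rpower (INR N) (- (p - 2)) / (p - 2).
Proof.
  intros Hb HK HC Hp. destruct (bnd_cv F K C p Hb HK HC Hp) as [l [Hl Ht]].
  rewrite (lattice_sum_eq F l Hl). split; auto. exists l; auto.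
Qed.

Lemma sum_swap (a : nat -> nat -> R) N M :
  sum_f_R0 (fun i => sum_f_R0 (fun j => a i j) M) N =
  sum_f_R0 (fun j => sum_f_R0 (fun i => a i j) N) M.
Proof.
  induction N.
  - simpl. reflexivity.
  - rewrite tech5, IHN. rewrite <- sum_plus. apply sum_eq. intros j _. rewrite tech5. reflexivity.
Qed.

Lemma zs_swap (a : Z -> Z -> R) N :
  zs (fun m => zs (fun n => a m n) N) N = zs (fun n => zs (fun m => a m n) N) N.
Proof. unfold zs. apply sum_swap. Qed.

Lemma lattice_sum_ext F G : (forall m n, F m n = G m n) -> lattice_sum F = lattice_sum G.
Proof.
  intros H. assert (F = G). { apply functional_extensionality; intro m.
    apply functional_extensionality; intro n. apply H. }
  subst; reflexivity.
Qed.

Lemma lattice_sum_sq_ext F G : (forall N, sq_sum F N = sq_sum G N) -> lattice_sum F = lattice_sum G.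
Proof.
  intros H. assert (sq_sum F = sq_sum G) by (apply functional_extensionality; auto).
  unfold lattice_sum. rewrite H0. reflexivity.
Qed.

Lemma lattice_sum_swap F : lattice_sum (fun m n => F n m) = lattice_sum F.
Proof.
  apply lattice_sum_sq_ext. intros N. rewrite !sq_sum_zs. rewrite (zs_swap (fun m n => Gz F m n)).
  apply zs_ext. intros z _. apply zs_ext. intros w _. unfold Gz.
  rewrite Bool.andb_comm. reflexivity.
Qed.

Lemma sq_sum_lin a b F G N :
  sq_sum (fun m n => a * F m n + b * G m n) N = a * sq_sum F N + b * sq_sum G N.
Proof.
  rewrite !sq_sum_zs. rewrite <- !zs_scal, <- zs_plus. apply zs_ext. intros z _.
  rewrite <- !zs_scal, <- zs_plus. apply zs_ext. intros w _. unfold Gz.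
  destruct (andb _ _); ring.
Qed.

Lemma cv_lin a b F G : cv F -> cv G -> cv (fun m n => a * F m n + b * G m n) /\
  lattice_sum (fun m n => a * F m n + b * G m n) = a * lattice_sum F + b * lattice_sum G.
Proof.
  intros HF HG. apply lattice_sum_spec in HF. apply lattice_sum_spec in HG.
  assert (Un_cv (sq_sum (fun m n => a * F m n + b * G m n)) (a * lattice_sum F + b * lattice_sum G)).
  { assert (sq_sum (fun m n => a * F m n + b * G m n) = fun N => a * sq_sum F N + b * sq_sum G N).
    { apply functional_extensionality. intros. apply sq_sum_lin. }
    rewrite H. apply CV_plus; apply CV_mult; auto; intros e He; exists 0%nat; intros;
      unfold Rdist; rewrite Rminus_diag, Rabs_R0; auto. }
  split. exists (a * lattice_sum F + b * lattice_sum G); auto.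
  apply lattice_sum_eq; auto.
Qed.

Definition W (g : Z -> R) (a : Z) (M : nat) := sum_f_R0 (fun i => g (a + Z.of_nat i)%Z) M.

Lemma zs_W g N : zs g N = W g (- Z.of_nat N) (2 * N).
Proof. unfold zs, W. apply sum_eq. intros. f_equal. lia. Qed.

Lemma W_step g a M : W g (a + 1) M = W g a M + g (a + Z.of_nat M + 1)%Z - g a.
Proof.
  unfold W. assert (H := tech5 (fun i => g (a + Z.of_nat i)%Z) M).
  rewrite sum_shift1 in H.
  replace (sum_f_R0 (fun i => g (a + 1 + Z.of_nat i)%Z) M) with
    (sum_f_R0 (fun i => g (a + Z.of_nat (S i))%Z) M) by (apply sum_eq; intros; f_equal; lia).
  replace (g (a + Z.of_nat M + 1)%Z) with (g (a + Z.of_nat (S M))%Z) by (f_equal; lia).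
  replace (g a) with (g (a + Z.of_nat 0)%Z) by (f_equal; lia). lra.
Qed.

Lemma W_shift g a M t B :
  (forall j, (j < t)%nat -> Rabs (g (a + Z.of_nat j)%Z) <= B /\ Rabs (g (a + Z.of_nat j + Z.of_nat M + 1)%Z) <= B) ->
  Rabs (W g (a + Z.of_nat t) M - W g a M) <= 2 * INR t * B.
Proof.
  induction t; intros H.
  - simpl. replace (a + 0)%Z with a by lia. rewrite Rminus_diag, Rabs_R0. lra.
  - replace (a + Z.of_nat (S t))%Z with (a + Z.of_nat t + 1)%Z by lia.
    rewrite W_step. destruct (H t ltac:(lia)) as [H1 H2].
    specialize (IHt ltac:(intros j Hj; apply H; lia)).
    replace (W g (a + Z.of_nat t) M + g (a + Z.of_nat t + Z.of_nat M + 1)%Z - g (a + Z.of_nat t)%Z - W g a M)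
      with ((W g (a + Z.of_nat t) M - W g a M) + g (a + Z.of_nat t + Z.of_nat M + 1)%Z - g (a + Z.of_nat t)%Z) by ring.
    rewrite S_INR.
    set (D := W g (a + Z.of_nat t) M - W g a M) in *.
    set (u := g (a + Z.of_nat t + Z.of_nat M + 1)%Z) in *.
    set (v := g (a + Z.of_nat t)%Z) in *.
    pose proof (Rabs_triang (D + u) (- v)).
    pose proof (Rabs_triang D u).
    rewrite Rabs_Ropp in H0. unfold Rminus. lra.
Qed.

Lemma sum_rev (a : nat -> R) M : sum_f_R0 a M = sum_f_R0 (fun i => a (M - i)%nat) M.
Proof.
  induction M.
  - reflexivity.
  - rewrite (sum_shift1 (fun i => a (S M - i)%nat)). rewrite tech5. rewrite IHM.
    replace (S M - 0)%nat with (S M) by lia.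
    rewrite Rplus_comm. reflexivity.
Qed.

Lemma zs_refl g N : zs (fun m => g (- m)%Z) N = zs g N.
Proof.
  unfold zs. rewrite sum_rev. apply sum_eq. intros i Hi. f_equal. lia.
Qed.

Lemma row_diff (h : Z -> R) (N : nat) (n : Z) B :
  (- Z.of_nat N <= n <= Z.of_nat N)%Z ->
  (forall m', (Z.abs m' + Z.abs n >= Z.of_nat N + 1)%Z -> Rabs (h m') <= B) ->
  Rabs (zs (fun m => h (- m - n)%Z) N - zs h N) <= 2 * INR N * B.
Proof.
  intros Hn Hh.
  assert (HB : 0 <= B).
  { eapply Rle_trans; [apply Rabs_pos| apply (Hh (Z.of_nat N + 1)%Z)]. lia. }
  change (zs (fun m => h (- m - n)%Z) N) with (zs (fun m => (fun z => h (z - n)%Z) (- m)%Z) N).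
  rewrite zs_refl, !zs_W.
  assert (E : W (fun z => h (z - n)%Z) (- Z.of_nat N) (2 * N) = W h (- Z.of_nat N - n) (2 * N)).
  { unfold W. apply sum_eq. intros. f_equal. lia. }
  rewrite E.
  assert (HNB : 2 * INR (Z.to_nat (Z.abs n)) * B <= 2 * INR N * B).
  { apply Rmult_le_compat_r; auto. apply Rmult_le_compat_l; [lra|]. apply le_INR. lia. }
  destruct (Z_le_gt_dec 0 n).
  - set (a := (- Z.of_nat N - n)%Z).
    replace (- Z.of_nat N)%Z with (a + Z.of_nat (Z.to_nat n))%Z by (unfold a; lia).
    rewrite <- Rabs_Ropp. rewrite Ropp_minus_distr.
    eapply Rle_trans; [|exact HNB]. replace (Z.to_nat (Z.abs n)) with (Z.to_nat n) by lia.
    apply W_shift. intros j Hj. split; apply Hh; unfold a; lia.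
  - replace (- Z.of_nat N - n)%Z with (- Z.of_nat N + Z.of_nat (Z.to_nat (- n)))%Z by lia.
    set (a := (- Z.of_nat N)%Z).
    eapply Rle_trans; [|exact HNB]. replace (Z.to_nat (Z.abs n)) with (Z.to_nat (-n)) by lia.
    apply W_shift. intros j Hj. split; apply Hh; unfold a; lia.
Qed.

Lemma Rpower_2 X : 0 < X -> Rpower X 2 = X * X.
Proof. intros H. replace 2 with (INR 2) by (simpl; ring). rewrite Rpower_pow by auto. ring. Qed.

Lemma kmax_half m n : (Rabs (IZR m) + Rabs (IZR n)) / 2 <= kmax m n.
Proof. pose proof (kmax_ge_l m n). pose proof (kmax_ge_r m n). lra. Qed.

Lemma shear_Un_cv F K C p : bnd F K C p -> (1 <= K)%nat -> 0 <= C -> 2 < p ->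
  Un_cv (sq_sum (fun m n => F (- m - n)%Z n)) (lattice_sum F).
Proof.
  intros Hb HK HC Hp.
  destruct (bnd_cv2 F K C p Hb HK HC Hp) as [HcvF _].
  apply lattice_sum_spec in HcvF.
  set (F' := fun m n => F (- m - n)%Z n).
  assert (Hdiff : forall N, INR K <= (INR N + 1) / 2 ->
     Rabs (sq_sum F' N - sq_sum F N) <= (2 * INR N + 1) * (2 * INR N * (C * Rpower ((INR N + 1)/2) (- p)))).
  { intros N HN. rewrite !sq_sum_zs.
    rewrite (zs_swap (fun m n => Gz F' m n)), (zs_swap (fun m n => Gz F m n)).
    rewrite <- zs_minus. apply zs_bound. intros n Hn.
    rewrite (zs_ext (fun m => Gz F' m n) (fun m => Gz F (- m - n)%Z n)).
    2:{ intros z _. unfold Gz, F'. destruct (Z.eqb_spec z 0), (Z.eqb_spec n 0), (Z.eqb_spec (- z - n) 0);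
        simpl; auto; exfalso; lia. }
    apply (row_diff (fun m => Gz F m n)); auto.
    intros m' Hm'.
    assert (HK1 := INR_ge1 K HK).
    assert (Hr : INR N + 1 <= Rabs (IZR m') + Rabs (IZR n)).
    { rewrite <- !abs_IZR, <- plus_IZR, <- IZR_of_nat. replace (IZR (Z.of_nat N) + 1) with (IZR (Z.of_nat N + 1)) by (rewrite plus_IZR; auto).
      apply IZR_le. lia. }
    pose proof (kmax_half m' n).
    rewrite Gz_far by lra.
    eapply Rle_trans. apply Hb. lra.
    apply Rmult_le_compat_l; auto. apply Rpower_decr; lra. }
  intros e He.
  destruct (HcvF (e/2) ltac:(lra)) as [N1 HN1].
  destruct (Rpower_small (p - 2) (e / (2 * (16 * C + 1)))) as [X0 [HX0 HX0s]]; [lra| |].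
  { apply Rdiv_lt_0_compat; lra. }
  destruct (INR_unbounded (2 * X0 + 2 * INR K)) as [N2 HN2].
  exists (max N1 N2). intros N HN. unfold Rdist.
  assert (HN2' : INR N2 <= INR N) by (apply le_INR; lia).
  specialize (HN1 N ltac:(lia)). unfold Rdist in HN1.
  set (X := (INR N + 1) / 2) in *.
  assert (HX : X0 <= X) by (unfold X; pose proof (pos_INR K); lra).
  assert (HXK : INR K <= X) by (unfold X; pose proof (pos_INR K); lra).
  specialize (Hdiff N HXK). fold X in Hdiff. specialize (HX0s X HX).
  assert (HX1 : 0 < X) by lra.
  assert (Hpow : Rpower X (- (p - 2)) = X * X * Rpower X (- p)).
  { rewrite <- Rpower_2 by auto. rewrite <- Rpower_plus. f_equal. ring. }
  assert (Hb1 : (2 * INR N + 1) * (2 * INR N * (C * Rpower X (- p))) <= 16 * C * Rpower X (- (p - 2))).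
  { rewrite Hpow. pose proof (Rpower_pos X (- p)). pose proof (pos_INR N).
    assert (INR N = 2 * X - 1) by (unfold X; lra). rewrite H1.
    assert (0 <= C * Rpower X (-p)) by (apply Rmult_le_pos; lra).
    nra. }
  assert (Hb2 : 16 * C * Rpower X (- (p - 2)) <= e / 2).
  { apply Rlt_le in HX0s. apply (Rmult_le_compat_l (16 * C + 1)) in HX0s; [|lra].
    replace ((16 * C + 1) * (e / (2 * (16 * C + 1)))) with (e / 2) in HX0s by (field; lra).
    pose proof (Rpower_pos X (- (p - 2))). nra. }
  replace (sq_sum F' N - lattice_sum F) with ((sq_sum F' N - sq_sum F N) + (sq_sum F N - lattice_sum F)) by ring.
  eapply Rle_lt_trans; [apply Rabs_triang|]. lra.
Qed.

Lemma lattice_sum_shear F K C p : bnd F K C p -> (1 <= K)%nat -> 0 <= C -> 2 < p ->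
  cv (fun m n => F (- m - n)%Z n) /\ lattice_sum (fun m n => F (- m - n)%Z n) = lattice_sum F.
Proof.
  intros. pose proof (shear_Un_cv F K C p H H0 H1 H2). split. exists (lattice_sum F); auto.
  apply lattice_sum_eq; auto.
Qed.

Lemma cv_swap F : cv F -> cv (fun m n => F n m).
Proof.
  intros [l Hl]. exists l. assert (sq_sum (fun m n => F n m) = sq_sum F).
  { apply functional_extensionality. intros N. rewrite !sq_sum_zs. rewrite (zs_swap (fun m n => Gz F m n)).
    apply zs_ext. intros z _. apply zs_ext. intros w _. unfold Gz. rewrite Bool.andb_comm. reflexivity. }
  rewrite H; auto.
Qed.

Lemma cv_ext F G : (forall m n, F m n = G m n) -> cv F -> cv G.
Proof.
  intros H HF. replace G with F; auto. apply functional_extensionality; intro m.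
  apply functional_extensionality; intro n. apply H.
Qed.

Lemma bnd_cv' F K C p : bnd F K C p -> (1 <= K)%nat -> 0 <= C -> 2 < p -> cv F.
Proof. intros. apply (bnd_cv2 F K C p); auto. Qed.

Lemma uniform_tail K C p : (1 <= K)%nat -> 0 <= C -> 2 < p ->
  forall e, 0 < e -> exists N0, forall N, (N0 <= N)%nat ->
    (K <= N)%nat /\ 8 * C * Rpower (INR N) (- (p - 2)) / (p - 2) < e.
Proof.
  intros HK HC Hp e He.
  destruct (Rpower_small_nat (p - 2) (e * (p - 2) / (8 * C + 1))) as [N0 HN0]; [lra| |].
  { apply Rdiv_lt_0_compat; nra. }
  exists (max N0 K). intros N HN. split; [lia|]. specialize (HN0 N ltac:(lia)).
  apply (Rmult_lt_compat_l (8 * C + 1)) in HN0; [|lra].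
  replace ((8 * C + 1) * (e * (p - 2) / (8 * C + 1))) with (e * (p - 2)) in HN0 by (field; lra).
  pose proof (Rpower_pos (INR N) (- (p - 2))).
  apply (Rmult_lt_reg_r (p - 2)); [lra|]. unfold Rdiv. rewrite Rmult_assoc, Rinv_l, Rmult_1_r by lra.
  nra.
Qed.

Lemma deriv_sum (a a' : nat -> R -> R) M t :
  (forall i, (i <= M)%nat -> derivable_pt_lim (a i) t (a' i t)) ->
  derivable_pt_lim (fun u => sum_f_R0 (fun i => a i u) M) t (sum_f_R0 (fun i => a' i t) M).
Proof.
  induction M; intros H.
  - simpl. apply H. lia.
  - simpl. apply (derivable_pt_lim_plus (fun u => sum_f_R0 (fun i => a i u) M) (a (S M))).
    apply IHM; intros; apply H; lia. apply H; lia.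
Qed.

Lemma deriv_sq_sum (F F' : R -> Z -> Z -> R) t N :
  (forall m n, (m <> 0 \/ n <> 0)%Z -> derivable_pt_lim (fun u => F u m n) t (F' t m n)) ->
  derivable_pt_lim (fun u => sq_sum (F u) N) t (sq_sum (F' t) N).
Proof.
  intros H. unfold sq_sum.
  apply (deriv_sum (fun i u => sum_f_R0 (fun j =>
      if andb (Z.eqb (Z.of_nat i - Z.of_nat N) 0) (Z.eqb (Z.of_nat j - Z.of_nat N) 0) then 0
      else F u (Z.of_nat i - Z.of_nat N)%Z (Z.of_nat j - Z.of_nat N)%Z) (2 * N))
     (fun i u => sum_f_R0 (fun j =>
      if andb (Z.eqb (Z.of_nat i - Z.of_nat N) 0) (Z.eqb (Z.of_nat j - Z.of_nat N) 0) then 0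
      else F' u (Z.of_nat i - Z.of_nat N)%Z (Z.of_nat j - Z.of_nat N)%Z) (2 * N))).
  intros i _. 
  apply (deriv_sum (fun j u =>
      if andb (Z.eqb (Z.of_nat i - Z.of_nat N) 0) (Z.eqb (Z.of_nat j - Z.of_nat N) 0) then 0
      else F u (Z.of_nat i - Z.of_nat N)%Z (Z.of_nat j - Z.of_nat N)%Z)
     (fun j u =>
      if andb (Z.eqb (Z.of_nat i - Z.of_nat N) 0) (Z.eqb (Z.of_nat j - Z.of_nat N) 0) then 0
      else F' u (Z.of_nat i - Z.of_nat N)%Z (Z.of_nat j - Z.of_nat N)%Z)).
  intros j _. destruct (andb _ _) eqn:E.
  - apply derivable_pt_lim_const.
  - apply H. apply Bool.andb_false_iff in E. destruct E as [E|E]; apply Z.eqb_neq in E; lia.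
Qed.

Lemma lattice_deriv (F F' : R -> Z -> Z -> R) c (r : posreal) K C p :
  (1 <= K)%nat -> 0 <= C -> 2 < p ->
  (forall t, Boule c r t -> cv (F t)) ->
  (forall t, Boule c r t -> bnd (F' t) K C p) ->
  (forall t m n, Boule c r t -> (m <> 0 \/ n <> 0)%Z -> derivable_pt_lim (fun u => F u m n) t (F' t m n)) ->
  forall t, Boule c r t -> derivable_pt_lim (fun u => lattice_sum (F u)) t (lattice_sum (F' t)).
Proof.
  intros HK HC Hp Hcv Hb Hd.
  apply (CVU_derivable (fun N u => sq_sum (F u) N) (fun N u => sq_sum (F' u) N)
     (fun u => lattice_sum (F u)) (fun u => lattice_sum (F' u))).
  - intros e He. destruct (uniform_tail K C p HK HC Hp e He) as [N0 HN0].
    exists N0. intros N y HN Hy. destruct (HN0 N HN) as [HKN Hlt].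
    destruct (bnd_cv2 (F' y) K C p (Hb y Hy) HK HC Hp) as [_ Ht].
    eapply Rle_lt_trans; [apply Ht; auto|exact Hlt].
  - intros x Hx. apply lattice_sum_spec. auto.
  - intros N x Hx. apply deriv_sq_sum. intros; auto.
Qed.

From Coquelicot Require Import Coquelicot.
Open Scope R_scope.

Definition Q (x y : R) (m n : Z) : R := / y * (IZR m + x * IZR n) ^ 2 + y * IZR n ^ 2.
Definition Qx x y m n := 2 * IZR n * (IZR m + x * IZR n) / y.
Definition Qy x y m n := IZR n ^ 2 - (IZR m + x * IZR n) ^ 2 / y ^ 2.
Definition Qxx (x y : R) (m n : Z) := 2 * IZR n ^ 2 / y.
Definition Qxy x y m n := - (2 * IZR n * (IZR m + x * IZR n)) / y ^ 2.
Definition Qyy x y m n := 2 * (IZR m + x * IZR n) ^ 2 / y ^ 3.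
Definition DQ x y u1 u2 m n := Qx x y m n * u1 + Qy x y m n * u2.
Definition D2Q x y u1 u2 v1 v2 m n :=
  Qxx x y m n * (u1 * v1) + Qxy x y m n * (u1 * v2 + u2 * v1) + Qyy x y m n * (u2 * v2).

Lemma Q_line_deriv x y b e t m n : y + t * e <> 0 ->
  derivable_pt_lim (fun u => Q (x + u * b) (y + u * e) m n) t (DQ (x + t * b) (y + t * e) b e m n).
Proof.
  intros H. apply is_derive_Reals. unfold Q, DQ, Qx, Qy.
  auto_derive. auto. field. auto.
Qed.

Lemma DQ_line_deriv x y b e u1 u2 t m n : y + t * e <> 0 ->
  derivable_pt_lim (fun u => DQ (x + u * b) (y + u * e) u1 u2 m n) t
     (D2Q (x + t * b) (y + t * e) u1 u2 b e m n).
Proof.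
  intros H. apply is_derive_Reals. unfold D2Q, DQ, Qx, Qy, Qxx, Qxy, Qyy.
  auto_derive. repeat split; auto; apply Rmult_integral_contrapositive; split; auto; lra. field. auto.
Qed.

Definition T0 (f : R -> R) A x y m n := f (A * Q x y m n).
Definition T1 (f1 : R -> R) A x y u1 u2 m n := f1 (A * Q x y m n) * (A * DQ x y u1 u2 m n).
Definition T2 (f1 f2 : R -> R) A x y u1 u2 v1 v2 m n :=
  f2 (A * Q x y m n) * (A * DQ x y u1 u2 m n) * (A * DQ x y v1 v2 m n)
  + f1 (A * Q x y m n) * (A * D2Q x y u1 u2 v1 v2 m n).

Lemma dpl_eq f x l l' : derivable_pt_lim f x l -> l = l' -> derivable_pt_lim f x l'.
Proof. intros H ->; exact H. Qed.

Lemma dpl_ext f g x l : (forall u, f u = g u) -> derivable_pt_lim f x l -> derivable_pt_lim g x l.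
Proof. intros H. replace g with f; auto. apply functional_extensionality; auto. Qed.

Lemma dpl_scal (g : R -> R) A x l : derivable_pt_lim g x l -> derivable_pt_lim (fun u => A * g u) x (A * l).
Proof.
  intros H. apply (derivable_pt_lim_scal g A x l H).
Qed.

Lemma dpl_comp (f g : R -> R) x lg lf : derivable_pt_lim g x lg -> derivable_pt_lim f (g x) lf ->
  derivable_pt_lim (fun u => f (g u)) x (lf * lg).
Proof. intros H1 H2. apply (derivable_pt_lim_comp g f x lg lf H1 H2). Qed.

Lemma T0_line_deriv f f1 A x y b e t m n :
  y + t * e <> 0 ->
  derivable_pt_lim f (A * Q (x + t * b) (y + t * e) m n) (f1 (A * Q (x + t * b) (y + t * e) m n)) ->
  derivable_pt_lim (fun u => T0 f A (x + u * b) (y + u * e) m n) t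
    (T1 f1 A (x + t * b) (y + t * e) b e m n).
Proof.
  intros Hy Hf. unfold T0, T1.
  apply (dpl_comp f (fun u => A * Q (x + u * b) (y + u * e) m n)); auto.
  apply dpl_scal. apply Q_line_deriv; auto.
Qed.

Lemma T1_line_deriv f1 f2 A x y b e u1 u2 t m n :
  y + t * e <> 0 ->
  derivable_pt_lim f1 (A * Q (x + t * b) (y + t * e) m n) (f2 (A * Q (x + t * b) (y + t * e) m n)) ->
  derivable_pt_lim (fun u => T1 f1 A (x + u * b) (y + u * e) u1 u2 m n) t
    (T2 f1 f2 A (x + t * b) (y + t * e) u1 u2 b e m n).
Proof.
  intros Hy Hf.
  assert (H1 : derivable_pt_lim (fun u => f1 (A * Q (x + u * b) (y + u * e) m n)) t
      (f2 (A * Q (x + t * b) (y + t * e) m n) * (A * DQ (x + t * b) (y + t * e) b e m n))).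
  { apply (dpl_comp f1 (fun u => A * Q (x + u * b) (y + u * e) m n)); auto.
    apply dpl_scal. apply Q_line_deriv; auto. }
  assert (H2 : derivable_pt_lim (fun u => A * DQ (x + u * b) (y + u * e) u1 u2 m n) t
      (A * D2Q (x + t * b) (y + t * e) u1 u2 b e m n)).
  { apply dpl_scal. apply DQ_line_deriv; auto. }
  assert (H3 := derivable_pt_lim_mult _ _ _ _ _ H1 H2).
  eapply dpl_eq. eapply dpl_ext; [|exact H3]. intros u. reflexivity.
  unfold T2. ring.
Qed.

Lemma Rabs_le_inv a b : Rabs a <= b -> - b <= a <= b.
Proof. intros H. split; [pose proof (Rle_abs (-a)); rewrite Rabs_Ropp in H0|pose proof (Rle_abs a)]; lra. Qed.

Lemma sqrt3_bounds : 17/10 < sqrt 3 < 7/4.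
Proof.
  assert (H := sqrt_sqrt 3 ltac:(lra)). assert (H0 := sqrt_pos 3). split; nra.
Qed.

Definition reg x y := Rabs (x - 1/2) <= 1/5 /\ Rabs (y - sqrt 3 / 2) <= 1/5.

Lemma reg_bounds x y : reg x y -> 3/10 <= x <= 7/10 /\ 13/20 <= y <= 11/10.
Proof.
  intros [H1 H2]. pose proof sqrt3_bounds. apply Rabs_le_inv in H1. apply Rabs_le_inv in H2. lra.
Qed.

Lemma abs_sq a : Rabs a * Rabs a = a ^ 2.
Proof. rewrite <- Rabs_mult. rewrite Rabs_pos_eq; [ring|nra]. Qed.

Lemma kmax_sq m n : kmax m n * kmax m n <= IZR m ^ 2 + IZR n ^ 2.
Proof.
  unfold kmax. apply Rmax_case_strong; intros _; rewrite abs_sq; nra.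
Qed.

Lemma abs_mult_le a b A B : Rabs a <= A -> Rabs b <= B -> Rabs (a * b) <= A * B.
Proof.
  intros H1 H2. rewrite Rabs_mult. apply Rmult_le_compat; auto; apply Rabs_pos.
Qed.

Section PB.
Variables (x y : R) (m n : Z).
Hypothesis Hx : 3/10 <= x <= 7/10.
Hypothesis Hy : 13/20 <= y <= 11/10.
Let k := kmax m n.
Let w := IZR m + x * IZR n.

Lemma hk0 : 0 <= k.
Proof. unfold k, kmax. eapply Rle_trans; [apply Rabs_pos| apply Rmax_l]. Qed.
Lemma hn : Rabs (IZR n) <= k.
Proof. apply kmax_ge_r. Qed.
Lemma hm : Rabs (IZR m) <= k.
Proof. apply kmax_ge_l. Qed.
Lemma hw : Rabs w <= 2 * k.
Proof.
  unfold w. eapply Rle_trans; [apply Rabs_triang|]. rewrite Rabs_mult.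
  pose proof hn; pose proof hm. rewrite (Rabs_pos_eq x) by lra.
  pose proof (Rabs_pos (IZR n)). nra.
Qed.
Lemma hiy : Rabs (/ y) <= 2.
Proof. rewrite Rabs_pos_eq. apply (Rmult_le_reg_l y); [lra|]. rewrite Rinv_r; lra.
  apply Rlt_le, Rinv_0_lt_compat; lra. Qed.

Lemma Q_lower : k * k / 10 <= Q x y m n.
Proof.
  unfold Q. pose proof (kmax_sq m n). fold k in H.
  assert (Hiy : 10/11 <= / y). { apply (Rmult_le_reg_l y); [lra|]. rewrite Rinv_r; lra. }
  assert (Hm : IZR m = w - x * IZR n) by (unfold w; ring).
  rewrite Hm in H. fold w.
  assert (0 <= w ^ 2) by nra. assert (0 <= IZR n ^ 2) by nra.
  assert (x * x <= 1/2) by nra.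
  assert ((w - x * IZR n) ^ 2 <= 2 * w ^ 2 + 2 * (x*x) * IZR n ^ 2) by (pose proof (pow2_ge_0 (w + x * IZR n)); nra).
  assert (0 <= (/ y - 10/11) * w ^ 2) by (apply Rmult_le_pos; lra).
  assert (0 <= (y - 13/20) * IZR n ^ 2) by (apply Rmult_le_pos; lra).
  assert (0 <= (1/2 - x * x) * IZR n ^ 2) by (apply Rmult_le_pos; lra).
  lra.
Qed.

Lemma Qx_b : Rabs (Qx x y m n) <= 100 * (k * k).
Proof.
  unfold Qx. fold w. unfold Rdiv.
  replace (2 * IZR n * w * / y) with (2 * ((IZR n * w) * / y)) by ring.
  rewrite Rabs_mult, (Rabs_pos_eq 2) by lra.
  assert (Rabs (IZR n * w * / y) <= k * (2 * k) * 2).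
  { apply abs_mult_le; [apply abs_mult_le|]; auto using hn, hw, hiy. }
  pose proof hk0. nra.
Qed.

Lemma Qxx_b : Rabs (Qxx x y m n) <= 100 * (k * k).
Proof.
  unfold Qxx. unfold Rdiv.
  replace (2 * IZR n ^ 2 * / y) with (2 * ((IZR n * IZR n) * / y)) by ring.
  rewrite Rabs_mult, (Rabs_pos_eq 2) by lra.
  assert (Rabs (IZR n * IZR n * / y) <= k * k * 2).
  { apply abs_mult_le; [apply abs_mult_le|]; auto using hn, hw, hiy. }
  pose proof hk0. nra.
Qed.

Lemma Qxy_b : Rabs (Qxy x y m n) <= 100 * (k * k).
Proof.
  unfold Qxy. fold w. unfold Rdiv.
  replace (- (2 * IZR n * w) * / y ^ 2) with (- (2 * ((IZR n * w) * (/ y * / y)))) by (field; lra).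
  rewrite Rabs_Ropp, Rabs_mult, (Rabs_pos_eq 2) by lra.
  assert (Rabs (IZR n * w * (/ y * / y)) <= k * (2 * k) * (2 * 2)).
  { apply abs_mult_le; apply abs_mult_le; auto using hn, hw, hiy. }
  pose proof hk0. nra.
Qed.

Lemma Qy_b : Rabs (Qy x y m n) <= 100 * (k * k).
Proof.
  unfold Qy. fold w. unfold Rdiv.
  replace (IZR n ^ 2 - w ^ 2 * / y ^ 2) with (IZR n * IZR n - (w * w) * (/ y * / y)) by (field; lra).
  eapply Rle_trans; [apply Rabs_triang|]. rewrite Rabs_Ropp.
  assert (Rabs (IZR n * IZR n) <= k * k) by (apply abs_mult_le; apply hn).
  assert (Rabs (w * w * (/ y * / y)) <= (2 * k) * (2 * k) * (2 * 2)).
  { apply abs_mult_le; apply abs_mult_le; auto using hn, hw, hiy. }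
  pose proof hk0. nra.
Qed.

Lemma Qyy_b : Rabs (Qyy x y m n) <= 100 * (k * k).
Proof.
  unfold Qyy. fold w. unfold Rdiv.
  replace (2 * w ^ 2 * / y ^ 3) with (2 * ((w * w) * (/ y * / y * / y))) by (field; lra).
  rewrite Rabs_mult, (Rabs_pos_eq 2) by lra.
  assert (Rabs (w * w * (/ y * / y * / y)) <= (2 * k) * (2 * k) * (2 * 2 * 2)).
  { apply abs_mult_le; apply abs_mult_le; auto using hw, hiy. apply abs_mult_le; apply hiy. }
  pose proof hk0. nra.
Qed.

Lemma DQ_b u1 u2 : Rabs u1 <= 1 -> Rabs u2 <= 1 -> Rabs (DQ x y u1 u2 m n) <= 200 * (k * k).
Proof.
  intros H1 H2. unfold DQ. eapply Rle_trans; [apply Rabs_triang|].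
  assert (Rabs (Qx x y m n * u1) <= 100 * (k * k) * 1) by (apply abs_mult_le; auto using Qx_b).
  assert (Rabs (Qy x y m n * u2) <= 100 * (k * k) * 1) by (apply abs_mult_le; auto using Qy_b).
  lra.
Qed.

Lemma D2Q_b u1 u2 v1 v2 : Rabs u1 <= 1 -> Rabs u2 <= 1 -> Rabs v1 <= 1 -> Rabs v2 <= 1 ->
  Rabs (D2Q x y u1 u2 v1 v2 m n) <= 400 * (k * k).
Proof.
  intros H1 H2 H3 H4. unfold D2Q.
  eapply Rle_trans; [apply Rabs_triang|].
  eapply Rle_trans; [apply Rplus_le_compat_r, Rabs_triang|].
  assert (Rabs (u1 * v1) <= 1 * 1) by (apply abs_mult_le; auto).
  assert (Rabs (u2 * v2) <= 1 * 1) by (apply abs_mult_le; auto).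
  assert (Rabs (u1 * v2 + u2 * v1) <= 2).
  { eapply Rle_trans; [apply Rabs_triang|].
    assert (Rabs (u1 * v2) <= 1 * 1) by (apply abs_mult_le; auto).
    assert (Rabs (u2 * v1) <= 1 * 1) by (apply abs_mult_le; auto). lra. }
  assert (Rabs (Qxx x y m n * (u1 * v1)) <= 100 * (k * k) * (1 * 1)) by (apply abs_mult_le; auto using Qxx_b).
  assert (Rabs (Qyy x y m n * (u2 * v2)) <= 100 * (k * k) * (1 * 1)) by (apply abs_mult_le; auto using Qyy_b).
  assert (Rabs (Qxy x y m n * (u1 * v2 + u2 * v1)) <= 100 * (k * k) * 2) by (apply abs_mult_le; auto using Qxy_b).
  lra.
Qed.
End PB.

Lemma Rpower_le_exp r a b : 1 <= r -> a <= b -> Rpower r a <= Rpower r b.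
Proof.
  intros Hr Hab. unfold Rpower. assert (0 <= ln r).
  { rewrite <- ln_1. destruct (Req_dec r 1). subst; lra. left; apply ln_increasing; lra. }
  destruct (Req_dec (a * ln r) (b * ln r)). rewrite H0; lra.
  left. apply exp_increasing. nra.
Qed.

Lemma decay_norm g j : decay g j -> exists eta C R0, 1 < eta /\ 0 <= C /\ 1 <= R0 /\
  forall r, R0 <= r -> Rabs (g r) <= C * Rpower r (- (eta + j)).
Proof.
  intros [eta [Heta [C [R0 [HR0 H]]]]].
  exists eta, (Rmax C 0), (Rmax R0 1). split; auto. split; [apply Rmax_r|]. split; [apply Rmax_r|].
  intros r Hr. eapply Rle_trans. apply H. eapply Rle_trans; [|exact Hr]. apply Rmax_l.
  apply Rmult_le_compat_r. left; apply Rpower_pos. apply Rmax_l.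
Qed.

Lemma decay_lower g j eta C R0 eta' : 1 <= R0 -> 0 <= C -> eta' <= eta ->
  (forall r, R0 <= r -> Rabs (g r) <= C * Rpower r (- (eta + j))) ->
  forall r, R0 <= r -> Rabs (g r) <= C * Rpower r (- (eta' + j)).
Proof.
  intros HR0 HC He H r Hr. eapply Rle_trans. apply H; auto.
  apply Rmult_le_compat_l; auto. apply Rpower_le_exp; lra.
Qed.

Lemma in_F_bounds f f1 f2 : in_F f f1 f2 -> exists eta C R0, 1 < eta /\ 0 <= C /\ 1 <= R0 /\
  forall r, R0 <= r -> Rabs (f r) <= C * Rpower r (- (eta + 0)) /\
    Rabs (f1 r) <= C * Rpower r (- (eta + 1)) /\ Rabs (f2 r) <= C * Rpower r (- (eta + 2)).
Proof.
  intros [_ [_ [_ [D0 [D1 D2]]]]].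
  destruct (decay_norm _ _ D0) as [e0 [C0 [R0 [He0 [HC0 [HR0 H0]]]]]].
  destruct (decay_norm _ _ D1) as [e1 [C1 [R1 [He1 [HC1 [HR1 H1]]]]]].
  destruct (decay_norm _ _ D2) as [e2 [C2 [R2 [He2 [HC2 [HR2 H2]]]]]].
  set (eta := Rmin e0 (Rmin e1 e2)). set (C := Rmax C0 (Rmax C1 C2)). set (R := Rmax R0 (Rmax R1 R2)).
  assert (Hc0 : C0 <= C) by (unfold C; apply Rmax_l).
  assert (Hc1 : C1 <= C) by (unfold C; eapply Rle_trans; [apply Rmax_l|apply Rmax_r]).
  assert (Hc2 : C2 <= C) by (unfold C; eapply Rle_trans; [apply Rmax_r|apply Rmax_r]).
  assert (Hr0 : R0 <= R) by (unfold R; apply Rmax_l).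
  assert (Hr1 : R1 <= R) by (unfold R; eapply Rle_trans; [apply Rmax_l|apply Rmax_r]).
  assert (Hr2 : R2 <= R) by (unfold R; eapply Rle_trans; [apply Rmax_r|apply Rmax_r]).
  assert (He0' : eta <= e0) by (unfold eta; apply Rmin_l).
  assert (He1' : eta <= e1) by (unfold eta; eapply Rle_trans; [apply Rmin_r|apply Rmin_l]).
  assert (He2' : eta <= e2) by (unfold eta; eapply Rle_trans; [apply Rmin_r|apply Rmin_r]).
  exists eta, C, R. split. unfold eta. apply Rmin_case_strong; intros; auto.
  apply Rmin_case_strong; intros; auto.
  split. lra. split. lra.
  intros r Hr.
  assert (Hpw : forall a, 0 <= Rpower r a) by (intros; left; apply Rpower_pos).
  split; [|split].
  - eapply Rle_trans. apply (decay_lower f 0 e0 C0 R0 eta); auto; lra.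
    apply Rmult_le_compat_r; auto.
  - eapply Rle_trans. apply (decay_lower f1 1 e1 C1 R1 eta); auto; lra.
    apply Rmult_le_compat_r; auto.
  - eapply Rle_trans. apply (decay_lower f2 2 e2 C2 R2 eta); auto; lra.
    apply Rmult_le_compat_r; auto.
Qed.

Lemma decay_use (g : R -> R) j eta C R0 A Qv k :
  (forall r, R0 <= r -> Rabs (g r) <= C * Rpower r (- (eta + j))) ->
  0 <= C -> 0 < A -> 1 <= k -> k * k / 10 <= Qv -> R0 <= A * (k * k / 10) -> 0 <= eta + j ->
  Rabs (g (A * Qv)) <= C * Rpower (A / 10) (- (eta + j)) * Rpower k (- (2 * eta + 2 * j)).
Proof.
  intros H HC HA Hk HQ HR Hej.
  assert (0 < A * (k * k / 10)) by (apply Rmult_lt_0_compat; nra).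
  eapply Rle_trans. apply H. eapply Rle_trans; [exact HR|]. apply Rmult_le_compat_l; lra.
  rewrite Rmult_assoc. apply Rmult_le_compat_l; auto.
  eapply Rle_trans. apply Rpower_decr. lra. split; [exact H0|]. apply Rmult_le_compat_l; lra.
  right. replace (A * (k * k / 10)) with ((A / 10) * (k * k)) by field.
  rewrite <- Rpower_mult_distr by nra. f_equal.
  rewrite <- Rpower_2 by lra. rewrite Rpower_mult. f_equal. ring.
Qed.

Lemma Rp_k2 k c : 1 <= k -> Rpower k (- (c + 2)) * (k * k) = Rpower k (- c).
Proof.
  intros Hk. rewrite <- Rpower_2 by lra. rewrite <- Rpower_plus. f_equal; ring.
Qed.

Section TB.
Variables (f f1 f2 : R -> R) (A eta C R0 : R) (K0 : nat).
Hypothesis HA : 0 < A.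
Hypothesis HC : 0 <= C.
Hypothesis Heta : 1 < eta.
Hypothesis Hdec : forall r, R0 <= r -> Rabs (f r) <= C * Rpower r (- (eta + 0)) /\
    Rabs (f1 r) <= C * Rpower r (- (eta + 1)) /\ Rabs (f2 r) <= C * Rpower r (- (eta + 2)).
Hypothesis HK0 : forall k, INR K0 <= k -> 1 <= k /\ R0 <= A * (k * k / 10).

Lemma bnd_T0 x y : 3/10 <= x <= 7/10 -> 13/20 <= y <= 11/10 ->
  bnd (T0 f A x y) K0 (C * Rpower (A / 10) (- (eta + 0))) (2 * eta).
Proof.
  intros Hx Hy m n Hk. destruct (HK0 _ Hk) as [Hk1 HkR].
  unfold T0. eapply Rle_trans. apply (decay_use f 0 eta C R0 A (Q x y m n) (kmax m n)); auto.
  intros r Hr; apply Hdec; auto. apply Q_lower; auto. lra.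
  right. f_equal. f_equal. ring.
Qed.

Lemma bnd_T1 x y u1 u2 : 3/10 <= x <= 7/10 -> 13/20 <= y <= 11/10 -> Rabs u1 <= 1 -> Rabs u2 <= 1 ->
  bnd (T1 f1 A x y u1 u2) K0 (C * Rpower (A / 10) (- (eta + 1)) * (A * 200)) (2 * eta).
Proof.
  intros Hx Hy Hu1 Hu2 m n Hk. destruct (HK0 _ Hk) as [Hk1 HkR].
  unfold T1. set (k := kmax m n) in *.
  assert (H1 := decay_use f1 1 eta C R0 A (Q x y m n) k ltac:(intros r Hr; apply Hdec; auto) HC HA Hk1
     ltac:(apply Q_lower; auto) HkR ltac:(lra)).
  assert (H2 : Rabs (A * DQ x y u1 u2 m n) <= A * (200 * (k * k))).
  { rewrite Rabs_mult, (Rabs_pos_eq A) by lra. apply Rmult_le_compat_l; [lra|]. apply DQ_b; auto. }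
  eapply Rle_trans. apply abs_mult_le; [exact H1|exact H2].
  replace (2 * eta + 2 * 1) with (2 * eta + 2) by ring.
  rewrite <- (Rp_k2 k (2 * eta)) by auto. right. ring.
Qed.

Lemma bnd_T2 x y u1 u2 v1 v2 : 3/10 <= x <= 7/10 -> 13/20 <= y <= 11/10 ->
  Rabs u1 <= 1 -> Rabs u2 <= 1 -> Rabs v1 <= 1 -> Rabs v2 <= 1 ->
  bnd (T2 f1 f2 A x y u1 u2 v1 v2) K0
    (C * Rpower (A / 10) (- (eta + 2)) * (A * 200) * (A * 200) + C * Rpower (A / 10) (- (eta + 1)) * (A * 400))
    (2 * eta).
Proof.
  intros Hx Hy Hu1 Hu2 Hv1 Hv2 m n Hk. destruct (HK0 _ Hk) as [Hk1 HkR].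
  unfold T2. set (k := kmax m n) in *.
  assert (H1 := decay_use f1 1 eta C R0 A (Q x y m n) k ltac:(intros r Hr; apply Hdec; auto) HC HA Hk1
     ltac:(apply Q_lower; auto) HkR ltac:(lra)).
  assert (H0 := decay_use f2 2 eta C R0 A (Q x y m n) k ltac:(intros r Hr; apply Hdec; auto) HC HA Hk1
     ltac:(apply Q_lower; auto) HkR ltac:(lra)).
  assert (H2 : Rabs (A * DQ x y u1 u2 m n) <= A * (200 * (k * k))).
  { rewrite Rabs_mult, (Rabs_pos_eq A) by lra. apply Rmult_le_compat_l; [lra|]. apply DQ_b; auto. }
  assert (H3 : Rabs (A * DQ x y v1 v2 m n) <= A * (200 * (k * k))).
  { rewrite Rabs_mult, (Rabs_pos_eq A) by lra. apply Rmult_le_compat_l; [lra|]. apply DQ_b; auto. }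
  assert (H4 : Rabs (A * D2Q x y u1 u2 v1 v2 m n) <= A * (400 * (k * k))).
  { rewrite Rabs_mult, (Rabs_pos_eq A) by lra. apply Rmult_le_compat_l; [lra|]. apply D2Q_b; auto. }
  eapply Rle_trans; [apply Rabs_triang|].
  eapply Rle_trans. apply Rplus_le_compat.
  apply abs_mult_le; [apply abs_mult_le; [exact H0|exact H2]|exact H3].
  apply abs_mult_le; [exact H1|exact H4].
  replace (2 * eta + 2 * 1) with (2 * eta + 2) by ring.
  replace (2 * eta + 2 * 2) with ((2 * eta + 2) + 2) by ring.
  rewrite <- (Rp_k2 k (2 * eta)) by auto. rewrite <- (Rp_k2 k (2 * eta + 2)) by auto.
  right. ring.
Qed.
End TB.

Lemma choose_K0 A R0 : 0 < A -> exists K0, (1 <= K0)%nat /\ forall k, INR K0 <= k -> 1 <= k /\ R0 <= A * (k * k / 10).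
Proof.
  intros HA. destruct (INR_unbounded (Rabs (10 * R0 / A) + 1)) as [K0 HK0].
  pose proof (Rle_abs (10 * R0 / A)).
  exists K0. split.
  - destruct K0. rewrite INR_0 in HK0. pose proof (Rabs_pos (10 * R0 / A)). lra. lia.
  - intros k Hk. split. pose proof (Rabs_pos (10 * R0 / A)). lra.
    assert (10 * R0 / A <= k) by lra.
    assert (1 <= k) by (pose proof (Rabs_pos (10 * R0 / A)); lra). assert (k <= k * k) by nra.
    apply (Rmult_le_reg_l (10 / A)). apply Rdiv_lt_0_compat; lra.
    replace (10 / A * (A * (k * k / 10))) with (k * k) by (field; lra).
    replace (10 / A * R0) with (10 * R0 / A) by (field; lra). lra.
Qed.

Definition qq (m n : Z) := IZR m ^ 2 + IZR m * IZR n + IZR n ^ 2.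
Definition wt (g : R -> R) A m n := g (2 * A / sqrt 3 * qq m n).
Definition mono (a b : nat) (m n : Z) := IZR m ^ a * IZR n ^ b.

Lemma qq_swap m n : qq n m = qq m n.
Proof. unfold qq; ring. Qed.
Lemma qq_shear m n : qq (- m - n)%Z n = qq m n.
Proof. unfold qq; rewrite minus_IZR, opp_IZR; ring. Qed.

Lemma mono_bound a b m n : Rabs (mono a b m n) <= kmax m n ^ (a + b).
Proof.
  unfold mono. rewrite Rabs_mult, <- !RPow_abs, pow_add.
  apply Rmult_le_compat; try (apply pow_le, Rabs_pos).
  apply pow_maj_Rabs. rewrite Rabs_Rabsolu. apply kmax_ge_l.
  apply pow_maj_Rabs. rewrite Rabs_Rabsolu. apply kmax_ge_r.
Qed.

Lemma qq_lower m n : kmax m n * kmax m n / 10 <= 2 / sqrt 3 * qq m n.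
Proof.
  pose proof (kmax_sq m n). pose proof sqrt3_bounds.
  assert (kmax m n * kmax m n / 2 <= qq m n).
  { unfold qq. pose proof (pow2_ge_0 (IZR m + IZR n)). nra. }
  assert (1 <= 2 / sqrt 3).
  { apply (Rmult_le_reg_l (sqrt 3)); [lra|]. replace (sqrt 3 * (2 / sqrt 3)) with 2 by (field; lra). lra. }
  assert (0 <= kmax m n * kmax m n) by nra.
  nra.
Qed.

Section W.
Variables (g : R -> R) (A eta C R0 : R) (K0 : nat) (j : nat).
Hypothesis HA : 0 < A.
Hypothesis HC : 0 <= C.
Hypothesis Heta : 1 < eta.
Hypothesis Hg : forall r, R0 <= r -> Rabs (g r) <= C * Rpower r (- (eta + INR j)).
Hypothesis HK0 : forall k, INR K0 <= k -> 1 <= k /\ R0 <= A * (k * k / 10).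

Lemma bnd_wt a b : (a + b = 2 * j)%nat ->
  bnd (fun m n => wt g A m n * mono a b m n) K0 (C * Rpower (A / 10) (- (eta + INR j))) (2 * eta).
Proof.
  intros Hab m n Hk. destruct (HK0 _ Hk) as [Hk1 HkR]. set (k := kmax m n) in *.
  unfold wt. replace (2 * A / sqrt 3 * qq m n) with (A * (2 / sqrt 3 * qq m n)) by
     (pose proof sqrt3_bounds; field; lra).
  assert (H1 := decay_use g (INR j) eta C R0 A (2 / sqrt 3 * qq m n) k Hg HC HA Hk1 (qq_lower m n) HkR
     ltac:(pose proof (pos_INR j); lra)).
  eapply Rle_trans. apply abs_mult_le; [exact H1| apply mono_bound].
  fold k. rewrite Hab. rewrite pow_mult. rewrite <- (Rpower_pow j (k ^ 2)) by nra.
  rewrite Rmult_assoc. apply Rmult_le_compat_l. apply Rmult_le_pos; auto; left; apply Rpower_pos.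
  right. replace (k ^ 2) with (Rpower k 2) by (rewrite Rpower_2; [ring|lra]).
  rewrite Rpower_mult, <- Rpower_plus. f_equal. ring.
Qed.
End W.

Lemma cv_sub F G : cv F -> cv G -> cv (fun m n => F m n - G m n) /\
  lattice_sum (fun m n => F m n - G m n) = lattice_sum F - lattice_sum G.
Proof.
  intros HF HG. destruct (cv_lin 1 (-1) F G HF HG) as [H1 H2].
  split. eapply cv_ext; [|exact H1]. intros; simpl; ring.
  rewrite <- (lattice_sum_ext (fun m n => 1 * F m n + -1 * G m n)). rewrite H2; ring.
  intros; ring.
Qed.

Lemma comb3 F1 F2 F3 l1 l2 l3 :
  cv F1 -> lattice_sum F1 = 0 -> cv F2 -> lattice_sum F2 = 0 -> cv F3 -> lattice_sum F3 = 0 ->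
  cv (fun m n => l1 * F1 m n + l2 * F2 m n + l3 * F3 m n) /\
  lattice_sum (fun m n => l1 * F1 m n + l2 * F2 m n + l3 * F3 m n) = 0.
Proof.
  intros H1 E1 H2 E2 H3 E3.
  destruct (cv_lin l1 l2 F1 F2 H1 H2) as [H12 E12].
  destruct (cv_lin 1 l3 _ F3 H12 H3) as [H123 E123].
  split. eapply cv_ext; [|exact H123]. intros; simpl; ring.
  rewrite <- (lattice_sum_ext (fun m n => 1 * (l1 * F1 m n + l2 * F2 m n) + l3 * F3 m n)).
  rewrite E123, E12, E1, E2, E3. ring. intros; ring.
Qed.

Section Inv.
Variables (g : R -> R) (A : R).
Let W := wt g A.

Lemma D_swap a b : cv (fun m n => W m n * mono a b m n) ->
  cv (fun m n => W m n * (mono a b m n - mono a b n m)) /\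
  lattice_sum (fun m n => W m n * (mono a b m n - mono a b n m)) = 0.
Proof.
  intros H. set (G := fun m n => W m n * mono a b m n).
  assert (Hs := lattice_sum_swap G). assert (Hc := cv_swap G H).
  destruct (cv_sub G (fun m n => G n m) H Hc) as [H1 H2].
  assert (E : forall m n, G m n - G n m = W m n * (mono a b m n - mono a b n m)).
  { intros. unfold G, W, wt. rewrite qq_swap. ring. }
  split. eapply cv_ext; [exact E|exact H1].
  rewrite <- (lattice_sum_ext _ _ E). rewrite H2, Hs. ring.
Qed.

Lemma D_shear a b K C p : bnd (fun m n => W m n * mono a b m n) K C p -> (1 <= K)%nat -> 0 <= C -> 2 < p ->
  cv (fun m n => W m n * (mono a b m n - mono a b (- m - n)%Z n)) /\
  lattice_sum (fun m n => W m n * (mono a b m n - mono a b (- m - n)%Z n)) = 0.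
Proof.
  intros Hb HK HC Hp. set (G := fun m n => W m n * mono a b m n).
  assert (H : cv G) by (apply (bnd_cv' G K C p); auto).
  destruct (lattice_sum_shear G K C p Hb HK HC Hp) as [Hc Hs].
  destruct (cv_sub G (fun m n => G (- m - n)%Z n) H Hc) as [H1 H2].
  assert (E : forall m n, G m n - G (- m - n)%Z n = W m n * (mono a b m n - mono a b (- m - n)%Z n)).
  { intros. unfold G, W, wt. rewrite qq_shear. ring. }
  split. eapply cv_ext; [exact E|exact H1].
  rewrite <- (lattice_sum_ext _ _ E). rewrite H2, Hs. ring.
Qed.
End Inv.

Section Zeros.
Variables (f1 f2 : R -> R) (A eta C R0 : R) (K0 : nat).
Hypothesis HA : 0 < A.
Hypothesis HC : 0 <= C.
Hypothesis Heta : 1 < eta.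
Hypothesis HK1 : (1 <= K0)%nat.
Hypothesis Hg1 : forall r, R0 <= r -> Rabs (f1 r) <= C * Rpower r (- (eta + INR 1)).
Hypothesis Hg2 : forall r, R0 <= r -> Rabs (f2 r) <= C * Rpower r (- (eta + INR 2)).
Hypothesis HK0 : forall k, INR K0 <= k -> 1 <= k /\ R0 <= A * (k * k / 10).
Let W1 := wt f1 A.
Let W2 := wt f2 A.

Lemma Cpos j : 0 <= C * Rpower (A / 10) (- (eta + INR j)).
Proof. apply Rmult_le_pos; auto; left; apply Rpower_pos. Qed.

Lemma b1 a b : (a + b = 2)%nat -> bnd (fun m n => W1 m n * mono a b m n) K0 (C * Rpower (A / 10) (- (eta + INR 1))) (2 * eta).
Proof. intros. apply (bnd_wt f1 A eta C R0 K0 1); auto. Qed.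
Lemma b2 a b : (a + b = 4)%nat -> bnd (fun m n => W2 m n * mono a b m n) K0 (C * Rpower (A / 10) (- (eta + INR 2))) (2 * eta).
Proof. intros. apply (bnd_wt f2 A eta C R0 K0 2); auto. Qed.

Lemma cv1 a b : (a + b = 2)%nat -> cv (fun m n => W1 m n * mono a b m n).
Proof. intros. eapply bnd_cv'. apply b1; auto. auto. apply Cpos. lra. Qed.
Lemma cv2 a b : (a + b = 4)%nat -> cv (fun m n => W2 m n * mono a b m n).
Proof. intros. eapply bnd_cv'. apply b2; auto. auto. apply Cpos. lra. Qed.

Lemma sh1 a b : (a + b = 2)%nat ->
  cv (fun m n => W1 m n * (mono a b m n - mono a b (- m - n)%Z n)) /\
  lattice_sum (fun m n => W1 m n * (mono a b m n - mono a b (- m - n)%Z n)) = 0.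
Proof. intros. eapply D_shear. apply b1; auto. auto. apply Cpos. lra. Qed.
Lemma sh2 a b : (a + b = 4)%nat ->
  cv (fun m n => W2 m n * (mono a b m n - mono a b (- m - n)%Z n)) /\
  lattice_sum (fun m n => W2 m n * (mono a b m n - mono a b (- m - n)%Z n)) = 0.
Proof. intros. eapply D_shear. apply b2; auto. auto. apply Cpos. lra. Qed.
Lemma sw1 a b : (a + b = 2)%nat ->
  cv (fun m n => W1 m n * (mono a b m n - mono a b n m)) /\
  lattice_sum (fun m n => W1 m n * (mono a b m n - mono a b n m)) = 0.
Proof. intros. apply D_swap. apply cv1; auto. Qed.
Lemma sw2 a b : (a + b = 4)%nat ->
  cv (fun m n => W2 m n * (mono a b m n - mono a b n m)) /\
  lattice_sum (fun m n => W2 m n * (mono a b m n - mono a b n m)) = 0.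
Proof. intros. apply D_swap. apply cv2; auto. Qed.

Ltac zs_solve l1 l2 l3 H1 H2 H3 :=
  destruct H1 as [c1 e1]; destruct H2 as [c2 e2]; destruct H3 as [c3 e3];
  destruct (comb3 _ _ _ l1 l2 l3 c1 e1 c2 e2 c3 e3) as [c e];
  match type of c with cv ?G => match goal with |- cv ?F /\ lattice_sum ?F = 0 =>
    assert (E : forall m n, F m n = G m n) ; [|split; [eapply cv_ext; [intros m n; symmetry; apply E|exact c]
      |rewrite (lattice_sum_ext _ _ E); exact e]] end end;
  intros m n; cbv beta; unfold mono; rewrite ?minus_IZR, ?opp_IZR; field.

Lemma Z1 : cv (fun m n => W1 m n * (IZR n * (2 * IZR m + IZR n))) /\
  lattice_sum (fun m n => W1 m n * (IZR n * (2 * IZR m + IZR n))) = 0.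
Proof.
  pose proof (sh1 2 0 eq_refl) as H1.
  zs_solve (-1) 0 0 H1 (sh1 2 0 eq_refl) (sh1 2 0 eq_refl).
Qed.

Lemma Z2 : cv (fun m n => W1 m n * (4 * IZR m ^ 2 + 4 * IZR m * IZR n - 2 * IZR n ^ 2)) /\
  lattice_sum (fun m n => W1 m n * (4 * IZR m ^ 2 + 4 * IZR m * IZR n - 2 * IZR n ^ 2)) = 0.
Proof.
  pose proof (sh1 2 0 eq_refl) as H1. pose proof (sw1 2 0 eq_refl) as H2.
  zs_solve (-2) 4 0 H1 H2 (sh1 2 0 eq_refl).
Qed.

Lemma Z3 : cv (fun m n => W2 m n * (4 * IZR m ^ 2 * IZR n ^ 2 + 4 * IZR m * IZR n ^ 3)) /\
  lattice_sum (fun m n => W2 m n * (4 * IZR m ^ 2 * IZR n ^ 2 + 4 * IZR m * IZR n ^ 3)) = 0.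
Proof.
  pose proof (sw2 3 1 eq_refl) as H1. pose proof (sh2 3 1 eq_refl) as H2. pose proof (sh2 2 2 eq_refl) as H3.
  zs_solve (-8/3) (4/3) (4/3) H1 H2 H3.
Qed.

Lemma Z4 : cv (fun m n => W2 m n * (4 * IZR m ^ 4 + 8 * IZR m ^ 3 * IZR n - 4 * IZR m * IZR n ^ 3 - 2 * IZR n ^ 4)) /\
  lattice_sum (fun m n => W2 m n * (4 * IZR m ^ 4 + 8 * IZR m ^ 3 * IZR n - 4 * IZR m * IZR n ^ 3 - 2 * IZR n ^ 4)) = 0.
Proof.
  pose proof (sw2 4 0 eq_refl) as H1. pose proof (sw2 3 1 eq_refl) as H2. pose proof (sh2 2 2 eq_refl) as H3.
  zs_solve 4 8 (-2) H1 H2 H3.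
Qed.

Lemma Z5 : cv (fun m n => W2 m n * (2 * IZR m * IZR n ^ 3 + IZR n ^ 4)) /\
  lattice_sum (fun m n => W2 m n * (2 * IZR m * IZR n ^ 3 + IZR n ^ 4)) = 0.
Proof.
  pose proof (sh2 2 2 eq_refl) as H1.
  zs_solve (-1) 0 0 H1 (sh2 2 2 eq_refl) (sh2 2 2 eq_refl).
Qed.

Lemma Z6 : cv (fun m n => W2 m n * (8 * IZR m ^ 3 * IZR n + 12 * IZR m ^ 2 * IZR n ^ 2 + 6 * IZR m * IZR n ^ 3 + IZR n ^ 4)) /\
  lattice_sum (fun m n => W2 m n * (8 * IZR m ^ 3 * IZR n + 12 * IZR m ^ 2 * IZR n ^ 2 + 6 * IZR m * IZR n ^ 3 + IZR n ^ 4)) = 0.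
Proof.
  pose proof (sh2 3 1 eq_refl) as H1. pose proof (sh2 2 2 eq_refl) as H2.
  zs_solve 4 3 0 H1 H2 (sh2 2 2 eq_refl).
Qed.
End Zeros.

Lemma s2 : sqrt 3 * sqrt 3 = 3.
Proof. apply sqrt_sqrt; lra. Qed.
Lemma s0 : 0 < sqrt 3.
Proof. pose proof sqrt3_bounds; lra. Qed.

Lemma i0 : / sqrt 3 = sqrt 3 * / 3.
Proof. pose proof s2; pose proof s0. field_simplify_eq; [|lra]. nra. Qed.
Lemma i1 : / (sqrt 3 * / 2) = 2 * sqrt 3 * / 3.
Proof. pose proof s2; pose proof s0. field_simplify_eq; [|lra]. nra. Qed.
Lemma i2 : / ((sqrt 3 * / 2) ^ 2) = 4 * / 3.
Proof. pose proof s2; pose proof s0. field_simplify_eq; [|nra]. nra. Qed.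
Lemma i3 : / ((sqrt 3 * / 2) ^ 3) = 8 * sqrt 3 * / 9.
Proof. pose proof s2; pose proof s0. field_simplify_eq; [|nra]. nra. Qed.

Lemma sp2 : sqrt 3 ^ 2 = 3.
Proof. simpl. rewrite Rmult_1_r. apply s2. Qed.
Lemma sp3 : sqrt 3 ^ 3 = 3 * sqrt 3.
Proof. simpl. rewrite Rmult_1_r, <- Rmult_assoc, s2. ring. Qed.
Lemma sp4 : sqrt 3 ^ 4 = 9.
Proof. replace 4%nat with (2 * 2)%nat by reflexivity. rewrite pow_mult, sp2. ring. Qed.

Ltac hexsolve := unfold Rdiv; rewrite ?i0, ?i1, ?i2, ?i3; field_simplify_eq; rewrite ?sp2, ?sp3, ?sp4; ring.

Lemma hexQ A m n : A * Q (1/2) (sqrt 3 / 2) m n = 2 * A / sqrt 3 * qq m n.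
Proof. unfold Q, qq. hexsolve. Qed.

Section Hex.
Variables (f1 f2 : R -> R) (A : R).
Let W1 := wt f1 A.
Let W2 := wt f2 A.
Let x0 := 1/2.
Let y0 := sqrt 3 / 2.

Lemma hexT1x m n : T1 f1 A x0 y0 1 0 m n = (2 * A * sqrt 3 / 3) * (W1 m n * (IZR n * (2 * IZR m + IZR n))).
Proof.
  unfold T1, W1, wt, x0, y0. rewrite hexQ. set (u := f1 _).
  unfold DQ, Qx, Qy. hexsolve.
Qed.

Lemma hexT1y m n : T1 f1 A x0 y0 0 1 m n = (- A / 3) * (W1 m n * (4 * IZR m ^ 2 + 4 * IZR m * IZR n - 2 * IZR n ^ 2)).
Proof.
  unfold T1, W1, wt, x0, y0. rewrite hexQ. set (u := f1 _).
  unfold DQ, Qx, Qy. hexsolve.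
Qed.

Lemma hexT2xx m n : T2 f1 f2 A x0 y0 1 0 1 0 m n =
  (4 * A ^ 2 / 3) * (W2 m n * mono 0 4 m n) + (4 * A * sqrt 3 / 3) * (W1 m n * mono 0 2 m n)
  + (4 * A ^ 2 / 3) * (W2 m n * (4 * IZR m ^ 2 * IZR n ^ 2 + 4 * IZR m * IZR n ^ 3)).
Proof.
  unfold T2, W1, W2, wt, x0, y0, mono. rewrite hexQ. set (u := f1 _). set (v := f2 _).
  unfold DQ, D2Q, Qx, Qy, Qxx, Qxy, Qyy. hexsolve.
Qed.

Lemma hexT2yy m n : T2 f1 f2 A x0 y0 0 1 0 1 m n =
  (4 * A ^ 2 / 3) * (W2 m n * mono 0 4 m n)
  + (4 * A ^ 2 / 9) * (W2 m n * (4 * IZR m ^ 4 + 8 * IZR m ^ 3 * IZR n - 4 * IZR m * IZR n ^ 3 - 2 * IZR n ^ 4))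
  + (4 * A * sqrt 3 / 3) * (W1 m n * mono 0 2 m n)
  + (4 * A * sqrt 3 / 9) * (W1 m n * (4 * IZR m ^ 2 + 4 * IZR m * IZR n - 2 * IZR n ^ 2)).
Proof.
  unfold T2, W1, W2, wt, x0, y0, mono. rewrite hexQ. set (u := f1 _). set (v := f2 _).
  unfold DQ, D2Q, Qx, Qy, Qxx, Qxy, Qyy. hexsolve.
Qed.

Lemma hexT2xy m n : T2 f1 f2 A x0 y0 1 0 0 1 m n =
  (A ^ 2 * 2 * sqrt 3 / 3) * (W2 m n * (2 * IZR m * IZR n ^ 3 + IZR n ^ 4))
  + (- (A ^ 2 * 2 * sqrt 3 / 9)) * (W2 m n * (8 * IZR m ^ 3 * IZR n + 12 * IZR m ^ 2 * IZR n ^ 2 + 6 * IZR m * IZR n ^ 3 + IZR n ^ 4))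
  + (- (4 * A / 3)) * (W1 m n * (IZR n * (2 * IZR m + IZR n))).
Proof.
  unfold T2, W1, W2, wt, x0, y0, mono. rewrite hexQ. set (u := f1 _). set (v := f2 _).
  unfold DQ, D2Q, Qx, Qy, Qxx, Qxy, Qyy. hexsolve.
Qed.

Lemma hexT2yx m n : T2 f1 f2 A x0 y0 0 1 1 0 m n = T2 f1 f2 A x0 y0 1 0 0 1 m n.
Proof. unfold T2, D2Q. ring. Qed.
End Hex.

From Coquelicot Require Import Coquelicot.
Open Scope R_scope.

Lemma c_mult (f g : R * R -> R) z : continuous f z -> continuous g z -> continuous (fun w => f w * g w) z.
Proof. intros; apply (continuous_mult f g); auto. Qed.
Lemma c_plus (f g : R * R -> R) z : continuous f z -> continuous g z -> continuous (fun w => f w + g w) z.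
Proof. intros; apply (continuous_plus f g); auto. Qed.
Lemma c_opp (f : R * R -> R) z : continuous f z -> continuous (fun w => - f w) z.
Proof. intros; apply (continuous_opp f); auto. Qed.
Lemma c_minus (f g : R * R -> R) z : continuous f z -> continuous g z -> continuous (fun w => f w - g w) z.
Proof. intros. apply (continuous_minus f g); auto. Qed.
Lemma c_const (c : R) (z : R * R) : continuous (fun _ => c) z.
Proof. apply continuous_const. Qed.
Lemma c_fst (z : R * R) : continuous (fun w : R * R => fst w) z.
Proof. destruct z. apply continuous_fst. Qed.
Lemma c_snd (z : R * R) : continuous (fun w : R * R => snd w) z.
Proof. destruct z. apply continuous_snd. Qed.
Lemma c_inv (f : R * R -> R) z : continuous f z -> f z <> 0 -> continuous (fun w => / f w) z.
Proof. intros. apply (continuous_comp f Rinv); auto. apply continuous_Rinv; auto. Qed.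
Lemma c_comp (f : R * R -> R) (g : R -> R) z : continuous f z -> continuity_pt g (f z) -> continuous (fun w => g (f w)) z.
Proof. intros. apply (continuous_comp f g); auto. apply continuity_pt_filterlim; auto. Qed.
Lemma c_pow (f : R * R -> R) z k : continuous f z -> continuous (fun w => f w ^ k) z.
Proof. intros. induction k. simpl. apply c_const. simpl. apply c_mult; auto. Qed.

Lemma c_eps (F : R -> R -> R) x0 y0 : continuous (fun w : R * R => F (fst w) (snd w)) (x0, y0) ->
  forall e, 0 < e -> exists d, 0 < d /\ forall x y, Rabs (x - x0) < d -> Rabs (y - y0) < d ->
    Rabs (F x y - F x0 y0) < e.
Proof.
  intros H e He. apply filterlim_locally with (eps := mkposreal e He) in H.
  destruct H as [d Hd]. exists d. split. apply cond_pos. intros x y Hx Hy.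
  specialize (Hd (x, y)). simpl in Hd. apply Hd. split; auto.
Qed.

Lemma c_sum (a : nat -> R * R -> R) M z :
  (forall i, (i <= M)%nat -> continuous (a i) z) ->
  continuous (fun w => sum_f_R0 (fun i => a i w) M) z.
Proof.
  induction M; intros H.
  - simpl. apply H. lia.
  - simpl. apply c_plus. apply IHM. intros; apply H; lia. apply H; lia.
Qed.

Lemma c_sq_sum (F : R -> R -> Z -> Z -> R) N z :
  (forall m n, (m <> 0 \/ n <> 0)%Z -> continuous (fun w => F (fst w) (snd w) m n) z) ->
  continuous (fun w => sq_sum (F (fst w) (snd w)) N) z.
Proof.
  intros H. unfold sq_sum.
  apply (c_sum (fun i w => sum_f_R0 (fun j =>
      if andb (Z.eqb (Z.of_nat i - Z.of_nat N) 0) (Z.eqb (Z.of_nat j - Z.of_nat N) 0) then 0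
      else F (fst w) (snd w) (Z.of_nat i - Z.of_nat N)%Z (Z.of_nat j - Z.of_nat N)%Z) (2 * N))).
  intros i _.
  apply (c_sum (fun j w =>
      if andb (Z.eqb (Z.of_nat i - Z.of_nat N) 0) (Z.eqb (Z.of_nat j - Z.of_nat N) 0) then 0
      else F (fst w) (snd w) (Z.of_nat i - Z.of_nat N)%Z (Z.of_nat j - Z.of_nat N)%Z)).
  intros j _. destruct (andb _ _) eqn:E.
  - apply c_const.
  - apply H. apply Bool.andb_false_iff in E. destruct E as [E|E]; apply Z.eqb_neq in E; lia.
Qed.

Lemma lattice_cont (F : R -> R -> Z -> Z -> R) x0 y0 rho K C p :
  0 < rho -> (1 <= K)%nat -> 0 <= C -> 2 < p ->
  (forall x y, Rabs (x - x0) <= rho -> Rabs (y - y0) <= rho -> bnd (F x y) K C p) ->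
  (forall m n, (m <> 0 \/ n <> 0)%Z -> continuous (fun w => F (fst w) (snd w) m n) (x0, y0)) ->
  forall e, 0 < e -> exists d, 0 < d /\ forall x y, Rabs (x - x0) < d -> Rabs (y - y0) < d ->
    Rabs (lattice_sum (F x y) - lattice_sum (F x0 y0)) < e.
Proof.
  intros Hrho HK HC Hp Hb Hc e He.
  destruct (uniform_tail K C p HK HC Hp (e / 3) ltac:(lra)) as [N HN].
  destruct (HN N (le_n _)) as [HKN Hlt].
  assert (Hcs := c_sq_sum F N (x0, y0) Hc).
  destruct (c_eps (fun x y => sq_sum (F x y) N) x0 y0 Hcs (e / 3) ltac:(lra)) as [d [Hd Hdd]].
  exists (Rmin d rho). split. apply Rmin_case; lra.
  intros x y Hx Hy.
  assert (Hx' : Rabs (x - x0) < d) by (eapply Rlt_le_trans; [exact Hx| apply Rmin_l]).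
  assert (Hy' : Rabs (y - y0) < d) by (eapply Rlt_le_trans; [exact Hy| apply Rmin_l]).
  assert (Hx'' : Rabs (x - x0) <= rho) by (left; eapply Rlt_le_trans; [exact Hx| apply Rmin_r]).
  assert (Hy'' : Rabs (y - y0) <= rho) by (left; eapply Rlt_le_trans; [exact Hy| apply Rmin_r]).
  specialize (Hdd x y Hx' Hy').
  assert (Hr0 : 0 <= rho) by lra.
  destruct (bnd_cv2 (F x y) K C p (Hb x y Hx'' Hy'') HK HC Hp) as [_ T1].
  destruct (bnd_cv2 (F x0 y0) K C p (Hb x0 y0 ltac:(rewrite Rminus_diag, Rabs_R0; lra) ltac:(rewrite Rminus_diag, Rabs_R0; lra)) HK HC Hp) as [_ T2].
  specialize (T1 N HKN). specialize (T2 N HKN).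
  replace (lattice_sum (F x y) - lattice_sum (F x0 y0)) with
    ((lattice_sum (F x y) - sq_sum (F x y) N) + (sq_sum (F x y) N - sq_sum (F x0 y0) N)
      - (lattice_sum (F x0 y0) - sq_sum (F x0 y0) N)) by ring.
  pose proof (Rabs_triang ((lattice_sum (F x y) - sq_sum (F x y) N) + (sq_sum (F x y) N - sq_sum (F x0 y0) N)) (- (lattice_sum (F x0 y0) - sq_sum (F x0 y0) N))).
  pose proof (Rabs_triang (lattice_sum (F x y) - sq_sum (F x y) N) (sq_sum (F x y) N - sq_sum (F x0 y0) N)).
  rewrite Rabs_Ropp in H. unfold Rminus at 1. lra.
Qed.

Ltac cstep := match goal with
 | |- continuous (fun w => @?a w + @?b w) _ => apply (c_plus a b)
 | |- continuous (fun w => @?a w - @?b w) _ => apply (c_minus a b)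
 | |- continuous (fun w => - @?a w) _ => apply (c_opp a)
 | |- continuous (fun w => @?a w * @?b w) _ => apply (c_mult a b)
 | |- continuous (fun w => @?a w ^ _) _ => apply (c_pow a)
 | |- continuous (fun w => / @?a w) _ => apply (c_inv a); [|simpl; repeat apply Rmult_integral_contrapositive_currified; auto; try apply R1_neq_R0]
 | |- continuous (fun w => fst w) _ => apply c_fst
 | |- continuous (fun w => snd w) _ => apply c_snd
 | |- continuous (fun w => _) _ => apply c_const
end.
Ltac cont_tac := repeat cstep.

Section Cont.
Variables (x0 y0 : R) (m n : Z).
Hypothesis Hy0 : y0 <> 0.

Lemma cQ : continuous (fun w => Q (fst w) (snd w) m n) (x0, y0).
Proof. unfold Q. cont_tac. Qed.
Lemma cDQ u1 u2 : continuous (fun w => DQ (fst w) (snd w) u1 u2 m n) (x0, y0).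
Proof. unfold DQ, Qx, Qy, Rdiv. cont_tac. Qed.
Lemma cD2Q u1 u2 v1 v2 : continuous (fun w => D2Q (fst w) (snd w) u1 u2 v1 v2 m n) (x0, y0).
Proof. unfold D2Q, Qxx, Qxy, Qyy, Rdiv. cont_tac. Qed.

Lemma cT2 (f1 f2 : R -> R) A u1 u2 v1 v2 :
  continuity_pt f1 (A * Q x0 y0 m n) -> continuity_pt f2 (A * Q x0 y0 m n) ->
  continuous (fun w => T2 f1 f2 A (fst w) (snd w) u1 u2 v1 v2 m n) (x0, y0).
Proof.
  intros H1 H2. unfold T2. apply c_plus; apply c_mult.
  - apply c_mult. apply (c_comp (fun w => A * Q (fst w) (snd w) m n) f2); auto.
    apply c_mult; [apply c_const|apply cQ].
    apply c_mult; [apply c_const|apply cDQ].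
  - apply c_mult; [apply c_const|apply cDQ].
  - apply (c_comp (fun w => A * Q (fst w) (snd w) m n) f1); auto.
    apply c_mult; [apply c_const|apply cQ].
  - apply c_mult; [apply c_const|apply cD2Q].
Qed.
End Cont.

Lemma lin3 F1 F2 F3 a1 a2 a3 : cv F1 -> cv F2 -> cv F3 ->
  cv (fun m n => a1 * F1 m n + a2 * F2 m n + a3 * F3 m n) /\
  lattice_sum (fun m n => a1 * F1 m n + a2 * F2 m n + a3 * F3 m n) =
    a1 * lattice_sum F1 + a2 * lattice_sum F2 + a3 * lattice_sum F3.
Proof.
  intros H1 H2 H3.
  destruct (cv_lin a1 a2 F1 F2 H1 H2) as [H12 E12].
  destruct (cv_lin 1 a3 _ F3 H12 H3) as [H123 E123].
  split. eapply cv_ext; [|exact H123]. intros; simpl; ring.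
  rewrite <- (lattice_sum_ext (fun m n => 1 * (a1 * F1 m n + a2 * F2 m n) + a3 * F3 m n)).
  rewrite E123, E12. ring. intros; ring.
Qed.

Lemma lin4 F1 F2 F3 F4 a1 a2 a3 a4 : cv F1 -> cv F2 -> cv F3 -> cv F4 ->
  cv (fun m n => a1 * F1 m n + a2 * F2 m n + a3 * F3 m n + a4 * F4 m n) /\
  lattice_sum (fun m n => a1 * F1 m n + a2 * F2 m n + a3 * F3 m n + a4 * F4 m n) =
    a1 * lattice_sum F1 + a2 * lattice_sum F2 + a3 * lattice_sum F3 + a4 * lattice_sum F4.
Proof.
  intros H1 H2 H3 H4.
  destruct (lin3 F1 F2 F3 a1 a2 a3 H1 H2 H3) as [H123 E123].
  destruct (cv_lin 1 a4 _ F4 H123 H4) as [H E].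
  split. eapply cv_ext; [|exact H]. intros; simpl; ring.
  rewrite <- (lattice_sum_ext (fun m n => 1 * (a1 * F1 m n + a2 * F2 m n + a3 * F3 m n) + a4 * F4 m n)).
  rewrite E, E123. ring. intros; ring.
Qed.

Lemma lin1 F a : cv F -> cv (fun m n => a * F m n) /\ lattice_sum (fun m n => a * F m n) = a * lattice_sum F.
Proof.
  intros H. destruct (cv_lin a 0 F F H H) as [H1 E1].
  split. eapply cv_ext; [|exact H1]. intros; simpl; ring.
  rewrite <- (lattice_sum_ext (fun m n => a * F m n + 0 * F m n)). rewrite E1. ring. intros; ring.
Qed.

Section HexSums.
Variables (f1 f2 : R -> R) (A eta C R0 : R) (K0 : nat).
Hypothesis HA : 0 < A.
Hypothesis HC : 0 <= C.
Hypothesis Heta : 1 < eta.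
Hypothesis HK1 : (1 <= K0)%nat.
Hypothesis Hg1 : forall r, R0 <= r -> Rabs (f1 r) <= C * Rpower r (- (eta + INR 1)).
Hypothesis Hg2 : forall r, R0 <= r -> Rabs (f2 r) <= C * Rpower r (- (eta + INR 2)).
Hypothesis HK0 : forall k, INR K0 <= k -> 1 <= k /\ R0 <= A * (k * k / 10).


Lemma Tf_eq : T_f f1 f2 A = 4 * A * sqrt 3 / 3 * lattice_sum (fun m n => wt f1 A m n * mono 0 2 m n)
   + 4 * A ^ 2 / 3 * lattice_sum (fun m n => wt f2 A m n * mono 0 4 m n).
Proof.
  unfold T_f. rewrite (lattice_sum_ext (fun m n => IZR n ^ 2 * f1 (2 * A / sqrt 3 * (IZR m ^ 2 + IZR m * IZR n + IZR n ^ 2)))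
     (fun m n => wt f1 A m n * mono 0 2 m n)).
  rewrite (lattice_sum_ext (fun m n => IZR n ^ 4 * f2 (2 * A / sqrt 3 * (IZR m ^ 2 + IZR m * IZR n + IZR n ^ 2)))
     (fun m n => wt f2 A m n * mono 0 4 m n)).
  f_equal. f_equal. unfold Rdiv. rewrite i0. ring.
  intros; unfold wt, qq, mono; ring.
  intros; unfold wt, qq, mono; ring.
Qed.

Lemma cvA a b : (a + b = 2)%nat -> cv (fun m n => wt f1 A m n * mono a b m n).
Proof. intros; eapply cv1; eauto. Qed.
Lemma cvB a b : (a + b = 4)%nat -> cv (fun m n => wt f2 A m n * mono a b m n).
Proof. intros; eapply cv2; eauto. Qed.
Lemma Z1' : cv (fun m n => wt f1 A m n * (IZR n * (2 * IZR m + IZR n))) /\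
  lattice_sum (fun m n => wt f1 A m n * (IZR n * (2 * IZR m + IZR n))) = 0.
Proof. eapply Z1; eauto. Qed.
Lemma Z2' : cv (fun m n => wt f1 A m n * (4 * IZR m ^ 2 + 4 * IZR m * IZR n - 2 * IZR n ^ 2)) /\
  lattice_sum (fun m n => wt f1 A m n * (4 * IZR m ^ 2 + 4 * IZR m * IZR n - 2 * IZR n ^ 2)) = 0.
Proof. eapply Z2; eauto. Qed.
Lemma Z3' : cv (fun m n => wt f2 A m n * (4 * IZR m ^ 2 * IZR n ^ 2 + 4 * IZR m * IZR n ^ 3)) /\
  lattice_sum (fun m n => wt f2 A m n * (4 * IZR m ^ 2 * IZR n ^ 2 + 4 * IZR m * IZR n ^ 3)) = 0.
Proof. eapply Z3; eauto. Qed.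
Lemma Z4' : cv (fun m n => wt f2 A m n * (4 * IZR m ^ 4 + 8 * IZR m ^ 3 * IZR n - 4 * IZR m * IZR n ^ 3 - 2 * IZR n ^ 4)) /\
  lattice_sum (fun m n => wt f2 A m n * (4 * IZR m ^ 4 + 8 * IZR m ^ 3 * IZR n - 4 * IZR m * IZR n ^ 3 - 2 * IZR n ^ 4)) = 0.
Proof. eapply Z4; eauto. Qed.
Lemma Z5' : cv (fun m n => wt f2 A m n * (2 * IZR m * IZR n ^ 3 + IZR n ^ 4)) /\
  lattice_sum (fun m n => wt f2 A m n * (2 * IZR m * IZR n ^ 3 + IZR n ^ 4)) = 0.
Proof. eapply Z5; eauto. Qed.
Lemma Z6' : cv (fun m n => wt f2 A m n * (8 * IZR m ^ 3 * IZR n + 12 * IZR m ^ 2 * IZR n ^ 2 + 6 * IZR m * IZR n ^ 3 + IZR n ^ 4)) /\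
  lattice_sum (fun m n => wt f2 A m n * (8 * IZR m ^ 3 * IZR n + 12 * IZR m ^ 2 * IZR n ^ 2 + 6 * IZR m * IZR n ^ 3 + IZR n ^ 4)) = 0.
Proof. eapply Z6; eauto. Qed.

Lemma Gx : lattice_sum (T1 f1 A (1/2) (sqrt 3 / 2) 1 0) = 0.
Proof.
  rewrite (lattice_sum_ext _ _ (hexT1x f1 A)). destruct Z1' as [c e].
  destruct (lin1 _ (2 * A * sqrt 3 / 3) c) as [_ E]. rewrite E, e. ring.
Qed.

Lemma Gy : lattice_sum (T1 f1 A (1/2) (sqrt 3 / 2) 0 1) = 0.
Proof.
  rewrite (lattice_sum_ext _ _ (hexT1y f1 A)). destruct Z2' as [c e].
  destruct (lin1 _ (- A / 3) c) as [_ E]. rewrite E, e. ring.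
Qed.

Lemma Hxx : lattice_sum (T2 f1 f2 A (1/2) (sqrt 3 / 2) 1 0 1 0) = T_f f1 f2 A.
Proof.
  rewrite (lattice_sum_ext _ _ (hexT2xx f1 f2 A)). destruct Z3' as [c e].
  destruct (lin3 _ _ _ (4 * A ^ 2 / 3) (4 * A * sqrt 3 / 3) (4 * A ^ 2 / 3) (cvB 0 4 eq_refl) (cvA 0 2 eq_refl) c) as [_ E].
  rewrite E, e, Tf_eq. ring.
Qed.

Lemma Hyy : lattice_sum (T2 f1 f2 A (1/2) (sqrt 3 / 2) 0 1 0 1) = T_f f1 f2 A.
Proof.
  rewrite (lattice_sum_ext _ _ (hexT2yy f1 f2 A)). destruct Z4' as [c e]. destruct Z2' as [c' e'].
  destruct (lin4 _ _ _ _ (4 * A ^ 2 / 3) (4 * A ^ 2 / 9) (4 * A * sqrt 3 / 3) (4 * A * sqrt 3 / 9) (cvB 0 4 eq_refl) c (cvA 0 2 eq_refl) c') as [_ E].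
  rewrite E, e, e', Tf_eq. ring.
Qed.

Lemma Hxy : lattice_sum (T2 f1 f2 A (1/2) (sqrt 3 / 2) 1 0 0 1) = 0.
Proof.
  rewrite (lattice_sum_ext _ _ (hexT2xy f1 f2 A)). destruct Z5' as [c5 e5]. destruct Z6' as [c6 e6]. destruct Z1' as [c1 e1].
  destruct (lin3 _ _ _ (A ^ 2 * 2 * sqrt 3 / 3) (- (A ^ 2 * 2 * sqrt 3 / 9)) (- (4 * A / 3)) c5 c6 c1) as [_ E].
  rewrite E, e5, e6, e1. ring.
Qed.

Lemma Hyx : lattice_sum (T2 f1 f2 A (1/2) (sqrt 3 / 2) 0 1 1 0) = 0.
Proof. rewrite (lattice_sum_ext _ _ (hexT2yx f1 f2 A)). apply Hxy. Qed.
End HexSums.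

Lemma kmax_nz m n : (m <> 0 \/ n <> 0)%Z -> 1 <= kmax m n.
Proof.
  intros H. destruct H as [H|H].
  - eapply Rle_trans; [|apply kmax_ge_l]. destruct (Z_le_gt_dec m 0).
    + assert (IZR m <= -1) by (apply IZR_le; lia). rewrite Rabs_left; lra.
    + assert (1 <= IZR m) by (apply IZR_le; lia). rewrite Rabs_right; lra.
  - eapply Rle_trans; [|apply kmax_ge_r]. destruct (Z_le_gt_dec n 0).
    + assert (IZR n <= -1) by (apply IZR_le; lia). rewrite Rabs_left; lra.
    + assert (1 <= IZR n) by (apply IZR_le; lia). rewrite Rabs_right; lra.
Qed.

Definition rb x y := 3/10 <= x <= 7/10 /\ 13/20 <= y <= 11/10.

Section Main.
Variables (f f1 f2 : R -> R) (A eta C R0 : R) (K0 : nat).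
Hypothesis HA : 0 < A.
Hypothesis HC : 0 <= C.
Hypothesis Heta : 1 < eta.
Hypothesis HK1 : (1 <= K0)%nat.
Hypothesis Hd1 : forall r, 0 < r -> derivable_pt_lim f r (f1 r).
Hypothesis Hd2 : forall r, 0 < r -> derivable_pt_lim f1 r (f2 r).
Hypothesis Hc2 : forall r, 0 < r -> continuity_pt f2 r.
Hypothesis Hdec : forall r, R0 <= r -> Rabs (f r) <= C * Rpower r (- (eta + 0)) /\
    Rabs (f1 r) <= C * Rpower r (- (eta + 1)) /\ Rabs (f2 r) <= C * Rpower r (- (eta + 2)).
Hypothesis HK0 : forall k, INR K0 <= k -> 1 <= k /\ R0 <= A * (k * k / 10).

Let C0 := C * Rpower (A / 10) (- (eta + 0)).
Let C1 := C * Rpower (A / 10) (- (eta + 1)) * (A * 200).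
Let C2 := C * Rpower (A / 10) (- (eta + 2)) * (A * 200) * (A * 200) + C * Rpower (A / 10) (- (eta + 1)) * (A * 400).

Lemma C0p : 0 <= C0.
Proof. unfold C0. apply Rmult_le_pos; auto; left; apply Rpower_pos. Qed.
Lemma C1p : 0 <= C1.
Proof. unfold C1. pose proof (Rpower_pos (A/10) (- (eta + 1))). apply Rmult_le_pos; [apply Rmult_le_pos|]; lra. Qed.
Lemma C2p : 0 <= C2.
Proof. unfold C2. pose proof (Rpower_pos (A/10) (- (eta + 1))). pose proof (Rpower_pos (A/10) (- (eta + 2))).
  apply Rplus_le_le_0_compat; repeat apply Rmult_le_pos; lra. Qed.

Lemma hp : 2 < 2 * eta.
Proof. lra. Qed.

Lemma posAQ x y m n : rb x y -> (m <> 0 \/ n <> 0)%Z -> 0 < A * Q x y m n.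
Proof.
  intros [Hx Hy] Hmn. apply Rmult_lt_0_compat; auto.
  pose proof (Q_lower x y m n Hx Hy). pose proof (kmax_nz m n Hmn). nra.
Qed.

Lemma cvT0 x y : rb x y -> cv (T0 f A x y).
Proof. intros [Hx Hy]. eapply bnd_cv'. eapply bnd_T0; eauto. auto. apply C0p. apply hp. Qed.

Lemma bT1 x y u1 u2 : rb x y -> Rabs u1 <= 1 -> Rabs u2 <= 1 -> bnd (T1 f1 A x y u1 u2) K0 C1 (2 * eta).
Proof. intros [Hx Hy] H1 H2. eapply bnd_T1; eauto. Qed.

Lemma cvT1 x y u1 u2 : rb x y -> Rabs u1 <= 1 -> Rabs u2 <= 1 -> cv (T1 f1 A x y u1 u2).
Proof. intros. eapply bnd_cv'. apply bT1; auto. auto. apply C1p. apply hp. Qed.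

Lemma bT2 x y u1 u2 v1 v2 : rb x y -> Rabs u1 <= 1 -> Rabs u2 <= 1 -> Rabs v1 <= 1 -> Rabs v2 <= 1 ->
  bnd (T2 f1 f2 A x y u1 u2 v1 v2) K0 C2 (2 * eta).
Proof. intros [Hx Hy] H1 H2 H3 H4. eapply bnd_T2; eauto. Qed.

Lemma cvT2 x y u1 u2 v1 v2 : rb x y -> Rabs u1 <= 1 -> Rabs u2 <= 1 -> Rabs v1 <= 1 -> Rabs v2 <= 1 ->
  cv (T2 f1 f2 A x y u1 u2 v1 v2).
Proof. intros. eapply bnd_cv'. apply bT2; auto. auto. apply C2p. apply hp. Qed.

Lemma LD0 x y b e c (r : posreal) : Rabs b <= 1 -> Rabs e <= 1 ->
  (forall t, Boule c r t -> rb (x + t * b) (y + t * e)) ->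
  forall t, Boule c r t ->
  derivable_pt_lim (fun u => lattice_sum (T0 f A (x + u * b) (y + u * e))) t
    (lattice_sum (T1 f1 A (x + t * b) (y + t * e) b e)).
Proof.
  intros Hb He Hrb.
  apply (lattice_deriv (fun u => T0 f A (x + u * b) (y + u * e)) (fun t => T1 f1 A (x + t * b) (y + t * e) b e)
    c r K0 C1 (2 * eta)).
  - exact HK1.
  - apply C1p.
  - apply hp.
  - intros t Ht. apply cvT0; auto.
  - intros t Ht. apply bT1; auto.
  - intros t m n Ht Hmn. destruct (Hrb t Ht) as [Hx Hy].
    apply T0_line_deriv. lra. apply Hd1. apply posAQ; auto.
Qed.

Lemma LD1 x y b e u1 u2 c (r : posreal) : Rabs b <= 1 -> Rabs e <= 1 -> Rabs u1 <= 1 -> Rabs u2 <= 1 ->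
  (forall t, Boule c r t -> rb (x + t * b) (y + t * e)) ->
  forall t, Boule c r t ->
  derivable_pt_lim (fun u => lattice_sum (T1 f1 A (x + u * b) (y + u * e) u1 u2)) t
    (lattice_sum (T2 f1 f2 A (x + t * b) (y + t * e) u1 u2 b e)).
Proof.
  intros Hb He Hu1 Hu2 Hrb.
  apply (lattice_deriv (fun u => T1 f1 A (x + u * b) (y + u * e) u1 u2)
    (fun t => T2 f1 f2 A (x + t * b) (y + t * e) u1 u2 b e) c r K0 C2 (2 * eta)).
  - exact HK1.
  - apply C2p.
  - apply hp.
  - intros t Ht. apply cvT1; auto.
  - intros t Ht. apply bT2; auto.
  - intros t m n Ht Hmn. destruct (Hrb t Ht) as [Hx Hy].
    apply T1_line_deriv. lra. apply Hd2. apply posAQ; auto.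
Qed.

Lemma rb_of x y : Rabs (x - 1/2) <= 1/5 -> Rabs (y - sqrt 3 / 2) <= 1/5 -> rb x y.
Proof. intros. apply reg_bounds. split; auto. Qed.

Lemma Hg1 : forall r, R0 <= r -> Rabs (f1 r) <= C * Rpower r (- (eta + INR 1)).
Proof. intros r Hr. replace (INR 1) with 1 by reflexivity. apply Hdec; auto. Qed.
Lemma Hg2 : forall r, R0 <= r -> Rabs (f2 r) <= C * Rpower r (- (eta + INR 2)).
Proof. intros r Hr. replace (INR 2) with 2 by (simpl; ring). apply Hdec; auto. Qed.

Lemma abs_le_1 : Rabs 1 <= 1.
Proof. rewrite Rabs_R1; lra. Qed.
Lemma abs_le_0 : Rabs 0 <= 1.
Proof. rewrite Rabs_R0; lra. Qed.

Lemma partA x y : Rabs (x - 1/2) < 1/10 -> Rabs (y - sqrt 3 / 2) < 1/10 ->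
  derivable_pt_lim (fun t => E_f f t y A) x (lattice_sum (T1 f1 A x y 1 0)) /\
  derivable_pt_lim (fun t => E_f f x t A) y (lattice_sum (T1 f1 A x y 0 1)).
Proof.
  intros Hx Hy.
  assert (Hr : 0 < 1/20) by lra. set (r := mkposreal (1/20) Hr).
  split.
  - assert (H := LD0 0 y 1 0 x r abs_le_1 abs_le_0).
    assert (Hrb : forall t, Boule x r t -> rb (0 + t * 1) (y + t * 0)).
    { intros t Ht. unfold Boule in Ht. simpl in Ht. apply rb_of.
      replace (0 + t * 1 - 1/2) with ((t - x) + (x - 1/2)) by ring.
      eapply Rle_trans; [apply Rabs_triang|]. lra.
      replace (y + t * 0) with y by ring. lra. }
    specialize (H Hrb x). assert (Boule x r x) by (unfold Boule; simpl; rewrite Rminus_diag, Rabs_R0; lra).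
    specialize (H H0).
    eapply dpl_eq. eapply dpl_ext; [|exact H].
    + intros u. cbv beta. replace (0 + u * 1) with u by ring. replace (y + u * 0) with y by ring. reflexivity.
    + replace (0 + x * 1) with x by ring. replace (y + x * 0) with y by ring. reflexivity.
  - assert (H := LD0 x 0 0 1 y r abs_le_0 abs_le_1).
    assert (Hrb : forall t, Boule y r t -> rb (x + t * 0) (0 + t * 1)).
    { intros t Ht. unfold Boule in Ht. simpl in Ht. apply rb_of.
      replace (x + t * 0) with x by ring. lra.
      replace (0 + t * 1 - sqrt 3 / 2) with ((t - y) + (y - sqrt 3 / 2)) by ring.
      eapply Rle_trans; [apply Rabs_triang|]. lra. }
    specialize (H Hrb y). assert (Boule y r y) by (unfold Boule; simpl; rewrite Rminus_diag, Rabs_R0; lra).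
    specialize (H H0).
    eapply dpl_eq. eapply dpl_ext; [|exact H].
    + intros u. cbv beta. replace (0 + u * 1) with u by ring. replace (x + u * 0) with x by ring. reflexivity.
    + replace (0 + y * 1) with y by ring. replace (x + y * 0) with x by ring. reflexivity.
Qed.

Lemma partB_x (u1 u2 v1 v2 L : R) : Rabs u1 <= 1 -> Rabs u2 <= 1 -> v1 = 1 -> v2 = 0 ->
  lattice_sum (T2 f1 f2 A (1/2) (sqrt 3 / 2) u1 u2 v1 v2) = L ->
  derivable_pt_lim (fun t => lattice_sum (T1 f1 A t (sqrt 3 / 2) u1 u2)) (1/2) L.
Proof.
  intros Hu1 Hu2 -> -> HL.
  assert (Hr : 0 < 1/20) by lra. set (r := mkposreal (1/20) Hr).
  assert (H := LD1 0 (sqrt 3 / 2) 1 0 u1 u2 (1/2) r abs_le_1 abs_le_0 Hu1 Hu2).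
  assert (Hrb : forall t, Boule (1/2) r t -> rb (0 + t * 1) (sqrt 3 / 2 + t * 0)).
  { intros t Ht. unfold Boule in Ht. simpl in Ht. apply rb_of.
    replace (0 + t * 1) with t by ring. lra.
    replace (sqrt 3 / 2 + t * 0 - sqrt 3 / 2) with 0 by ring. rewrite Rabs_R0. lra. }
  specialize (H Hrb (1/2)). assert (Boule (1/2) r (1/2)) by (unfold Boule; simpl; rewrite Rminus_diag, Rabs_R0; lra).
  specialize (H H0).
  eapply dpl_eq. eapply dpl_ext; [|exact H].
  + intros u. cbv beta. replace (0 + u * 1) with u by ring. replace (sqrt 3 / 2 + u * 0) with (sqrt 3 / 2) by ring. reflexivity.
  + replace (0 + 1/2 * 1) with (1/2) by ring. replace (sqrt 3 / 2 + 1/2 * 0) with (sqrt 3 / 2) by ring. exact HL.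
Qed.

Lemma partB_y (u1 u2 v1 v2 L : R) : Rabs u1 <= 1 -> Rabs u2 <= 1 -> v1 = 0 -> v2 = 1 ->
  lattice_sum (T2 f1 f2 A (1/2) (sqrt 3 / 2) u1 u2 v1 v2) = L ->
  derivable_pt_lim (fun t => lattice_sum (T1 f1 A (1/2) t u1 u2)) (sqrt 3 / 2) L.
Proof.
  intros Hu1 Hu2 -> -> HL.
  assert (Hr : 0 < 1/20) by lra. set (r := mkposreal (1/20) Hr).
  assert (H := LD1 (1/2) 0 0 1 u1 u2 (sqrt 3 / 2) r abs_le_0 abs_le_1 Hu1 Hu2).
  assert (Hrb : forall t, Boule (sqrt 3 / 2) r t -> rb (1/2 + t * 0) (0 + t * 1)).
  { intros t Ht. unfold Boule in Ht. simpl in Ht. apply rb_of.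
    replace (1/2 + t * 0 - 1/2) with 0 by ring. rewrite Rabs_R0. lra.
    replace (0 + t * 1) with t by ring. lra. }
  specialize (H Hrb (sqrt 3 / 2)). assert (Boule (sqrt 3 / 2) r (sqrt 3 / 2)) by (unfold Boule; simpl; rewrite Rminus_diag, Rabs_R0; lra).
  specialize (H H0).
  eapply dpl_eq. eapply dpl_ext; [|exact H].
  + intros u. cbv beta. replace (0 + u * 1) with u by ring. replace (1/2 + u * 0) with (1/2) by ring. reflexivity.
  + replace (0 + sqrt 3 / 2 * 1) with (sqrt 3 / 2) by ring. replace (1/2 + sqrt 3 / 2 * 0) with (1/2) by ring. exact HL.
Qed.

Lemma partB :
  derivable_pt_lim (fun t => lattice_sum (T1 f1 A t (sqrt 3 / 2) 1 0)) (1/2) (T_f f1 f2 A) /\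
  derivable_pt_lim (fun t => lattice_sum (T1 f1 A (1/2) t 0 1)) (sqrt 3 / 2) (T_f f1 f2 A) /\
  derivable_pt_lim (fun t => lattice_sum (T1 f1 A (1/2) t 1 0)) (sqrt 3 / 2) 0 /\
  derivable_pt_lim (fun t => lattice_sum (T1 f1 A t (sqrt 3 / 2) 0 1)) (1/2) 0.
Proof.
  repeat split.
  - apply (partB_x 1 0 1 0); auto using abs_le_1, abs_le_0. eapply Hxx; eauto using Hg1, Hg2.
  - apply (partB_y 0 1 0 1); auto using abs_le_1, abs_le_0. eapply Hyy; eauto using Hg1, Hg2.
  - apply (partB_y 1 0 0 1); auto using abs_le_1, abs_le_0. eapply Hxy; eauto using Hg1, Hg2.
  - apply (partB_x 0 1 1 0); auto using abs_le_1, abs_le_0. eapply Hyx; eauto using Hg1, Hg2.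
Qed.

Lemma cont_f1 r : 0 < r -> continuity_pt f1 r.
Proof. intros Hr. apply (derivable_continuous_pt f1 r (exist _ (f2 r) (Hd2 r Hr))). Qed.

Lemma Hcont u1 u2 v1 v2 : Rabs u1 <= 1 -> Rabs u2 <= 1 -> Rabs v1 <= 1 -> Rabs v2 <= 1 ->
  forall e, 0 < e -> exists d, 0 < d /\ forall x y, Rabs (x - 1/2) < d -> Rabs (y - sqrt 3 / 2) < d ->
    Rabs (lattice_sum (T2 f1 f2 A x y u1 u2 v1 v2) - lattice_sum (T2 f1 f2 A (1/2) (sqrt 3 / 2) u1 u2 v1 v2)) < e.
Proof.
  intros H1 H2 H3 H4.
  apply (lattice_cont (fun x y => T2 f1 f2 A x y u1 u2 v1 v2) (1/2) (sqrt 3 / 2) (1/5) K0 C2 (2 * eta)).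
  - lra.
  - exact HK1.
  - apply C2p.
  - apply hp.
  - intros x y Hx Hy. apply bT2; auto. apply rb_of; auto.
  - intros m n Hmn. pose proof sqrt3_bounds.
    assert (Hrb : rb (1/2) (sqrt 3 / 2)) by (unfold rb; lra).
    apply cT2. lra. apply cont_f1. apply posAQ; auto. apply Hc2. apply posAQ; auto.
Qed.

Lemma localmin : 0 < T_f f1 f2 A -> strict_local_min (fun x y => E_f f x y A) (1/2) (sqrt 3 / 2).
Proof.
  intros HT. set (T := T_f f1 f2 A) in *.
  pose proof sqrt3_bounds as Hs3.
  assert (Hrbp : rb (1/2) (sqrt 3 / 2)) by (unfold rb; lra).
  destruct (Hcont 1 0 1 0 abs_le_1 abs_le_0 abs_le_1 abs_le_0 (T/4) ltac:(lra)) as [d1 [Hd1p Hd1']].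
  destruct (Hcont 0 1 0 1 abs_le_0 abs_le_1 abs_le_0 abs_le_1 (T/4) ltac:(lra)) as [d2 [Hd2p Hd2']].
  destruct (Hcont 1 0 0 1 abs_le_1 abs_le_0 abs_le_0 abs_le_1 (T/4) ltac:(lra)) as [d3 [Hd3p Hd3']].
  assert (Exx : lattice_sum (T2 f1 f2 A (1/2) (sqrt 3 / 2) 1 0 1 0) = T) by (eapply Hxx; eauto using Hg1, Hg2).
  assert (Eyy : lattice_sum (T2 f1 f2 A (1/2) (sqrt 3 / 2) 0 1 0 1) = T) by (eapply Hyy; eauto using Hg1, Hg2).
  assert (Exy : lattice_sum (T2 f1 f2 A (1/2) (sqrt 3 / 2) 1 0 0 1) = 0) by (eapply Hxy; eauto using Hg1, Hg2).
  assert (EGx : lattice_sum (T1 f1 A (1/2) (sqrt 3 / 2) 1 0) = 0) by (eapply Gx; eauto using Hg1, Hg2).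
  assert (EGy : lattice_sum (T1 f1 A (1/2) (sqrt 3 / 2) 0 1) = 0) by (eapply Gy; eauto using Hg1, Hg2).
  rewrite Exx in Hd1'. rewrite Eyy in Hd2'. rewrite Exy in Hd3'.
  set (d := Rmin (1/10) (Rmin d1 (Rmin d2 d3))).
  assert (Hd : 0 < d) by (unfold d; repeat apply Rmin_case; lra).
  assert (Hdd : d <= 1/10 /\ d <= d1 /\ d <= d2 /\ d <= d3).
  { unfold d. repeat split.
    apply Rmin_l. eapply Rle_trans; [apply Rmin_r|apply Rmin_l].
    eapply Rle_trans; [apply Rmin_r|]. eapply Rle_trans; [apply Rmin_r|apply Rmin_l].
    eapply Rle_trans; [apply Rmin_r|]. eapply Rle_trans; [apply Rmin_r|apply Rmin_r]. }
  exists d. split; auto.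
  intros x y Hx Hy _ Hne. cbv beta.
  set (y0 := sqrt 3 / 2) in *.
  set (h1 := x - 1/2) in *. set (h2 := y - y0) in *.
  assert (Hh : h1 <> 0 \/ h2 <> 0).
  { destruct (Req_dec h1 0); destruct (Req_dec h2 0); auto. exfalso. apply Hne. unfold h1, h2 in *. f_equal; lra. }
  assert (Hh1 : Rabs h1 <= 1) by lra. assert (Hh2 : Rabs h2 <= 1) by lra.
  assert (Hr1 : 0 < 1) by lra. set (r1 := mkposreal 1 Hr1).
  assert (Hsm : forall s, Rabs s <= 3/2 -> Rabs (s * h1) <= 3/20 /\ Rabs (s * h2) <= 3/20).
  { intros s Hs. assert (Rabs h1 < 1/10) by lra. assert (Rabs h2 < 1/10) by lra.
    pose proof (Rabs_pos s). pose proof (Rabs_pos h1). pose proof (Rabs_pos h2).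
    rewrite !Rabs_mult. split; nra. }
  assert (Hrb : forall s, Boule (1/2) r1 s -> rb (1/2 + s * h1) (y0 + s * h2)).
  { intros s Hs. unfold Boule in Hs. simpl in Hs. assert (Rabs s <= 3/2).
    { apply Rabs_def2 in Hs. apply Rabs_le. lra. }
    destruct (Hsm s H) as [A1 A2]. apply rb_of.
    replace (1/2 + s * h1 - 1/2) with (s * h1) by ring. lra.
    replace (y0 + s * h2 - sqrt 3 / 2) with (s * h2) by (unfold y0; ring). lra. }
  set (g := fun u => lattice_sum (T0 f A (1/2 + u * h1) (y0 + u * h2))).
  set (g1 := fun u => lattice_sum (T1 f1 A (1/2 + u * h1) (y0 + u * h2) h1 h2)).
  set (g2 := fun u => lattice_sum (T2 f1 f2 A (1/2 + u * h1) (y0 + u * h2) h1 h2 h1 h2)).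
  assert (Dg : forall s, 0 <= s <= 1 -> derivable_pt_lim g s (g1 s)).
  { intros s Hs. apply (LD0 (1/2) y0 h1 h2 (1/2) r1); auto. unfold Boule; simpl. apply Rabs_def1; lra. }
  assert (Dg1 : forall s, 0 <= s <= 1 -> derivable_pt_lim g1 s (g2 s)).
  { intros s Hs. apply (LD1 (1/2) y0 h1 h2 h1 h2 (1/2) r1); auto. unfold Boule; simpl. apply Rabs_def1; lra. }
  assert (G10 : g1 0 = 0).
  { unfold g1. replace (1/2 + 0 * h1) with (1/2) by ring. replace (y0 + 0 * h2) with y0 by ring.
    rewrite (lattice_sum_ext _ (fun m n => h1 * T1 f1 A (1/2) y0 1 0 m n + h2 * T1 f1 A (1/2) y0 0 1 m n)).
    destruct (cv_lin h1 h2 _ _ (cvT1 (1/2) y0 1 0 Hrbp abs_le_1 abs_le_0) (cvT1 (1/2) y0 0 1 Hrbp abs_le_0 abs_le_1)) as [_ E].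
    rewrite E. rewrite EGx, EGy. ring.
    intros m n. unfold T1, DQ. ring. }
  assert (G2pos : forall s, 0 <= s <= 1 -> 0 < g2 s).
  { intros s Hs. unfold g2. set (zx := 1/2 + s * h1). set (zy := y0 + s * h2).
    assert (Hzx : Rabs (zx - 1/2) < d).
    { unfold zx. replace (1/2 + s * h1 - 1/2) with (s * h1) by ring. rewrite Rabs_mult.
      pose proof (Rabs_pos h1). rewrite (Rabs_pos_eq s) by lra. nra. }
    assert (Hzy : Rabs (zy - y0) < d).
    { unfold zy. replace (y0 + s * h2 - y0) with (s * h2) by ring. rewrite Rabs_mult.
      pose proof (Rabs_pos h2). rewrite (Rabs_pos_eq s) by lra. nra. }
    assert (Hz : rb zx zy).
    { apply Hrb. unfold Boule; simpl. apply Rabs_def1; lra. }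
    rewrite (lattice_sum_ext _ (fun m n => (h1 * h1) * T2 f1 f2 A zx zy 1 0 1 0 m n
        + (2 * h1 * h2) * T2 f1 f2 A zx zy 1 0 0 1 m n + (h2 * h2) * T2 f1 f2 A zx zy 0 1 0 1 m n)).
    2:{ intros m n. unfold T2, D2Q, DQ. ring. }
    destruct (lin3 _ _ _ (h1 * h1) (2 * h1 * h2) (h2 * h2)
       (cvT2 zx zy 1 0 1 0 Hz abs_le_1 abs_le_0 abs_le_1 abs_le_0)
       (cvT2 zx zy 1 0 0 1 Hz abs_le_1 abs_le_0 abs_le_0 abs_le_1)
       (cvT2 zx zy 0 1 0 1 Hz abs_le_0 abs_le_1 abs_le_0 abs_le_1)) as [_ E].
    rewrite E.
    assert (B1 := Hd1' zx zy ltac:(lra) ltac:(lra)).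
    assert (B2 := Hd2' zx zy ltac:(lra) ltac:(lra)).
    assert (B3 := Hd3' zx zy ltac:(lra) ltac:(lra)).
    apply Rabs_def2 in B1. apply Rabs_def2 in B2. apply Rabs_def2 in B3.
    set (a := lattice_sum (T2 f1 f2 A zx zy 1 0 1 0)) in *.
    set (b := lattice_sum (T2 f1 f2 A zx zy 1 0 0 1)) in *.
    set (c := lattice_sum (T2 f1 f2 A zx zy 0 1 0 1)) in *.
    assert (0 < h1 * h1 + h2 * h2).
    { destruct Hh as [Hh|Hh]; [pose proof (Rsqr_pos_lt h1 Hh)|pose proof (Rsqr_pos_lt h2 Hh)];
      unfold Rsqr in *; nra. }
    assert (2 * h1 * h2 * b >= - (T / 4) * (h1 * h1 + h2 * h2)).
    { pose proof (pow2_ge_0 (h1 - h2)). pose proof (pow2_ge_0 (h1 + h2)). nra. }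
    nra. }
  destruct (MVT_cor2 g g1 0 1 ltac:(lra) Dg) as [c [Hc1 Hc2']].
  destruct (MVT_cor2 g1 g2 0 c ltac:(lra) ltac:(intros s Hs; apply Dg1; lra)) as [c' [Hc'1 Hc'2]].
  assert (Hg2c := G2pos c' ltac:(lra)).
  assert (g 1 - g 0 > 0).
  { rewrite Hc1. rewrite G10 in Hc'1. replace (g1 c) with (g2 c' * (c - 0)) by lra. nra. }
  assert (Eg1 : g 1 = E_f f x y A).
  { unfold g. replace (1/2 + 1 * h1) with x by (unfold h1; ring). replace (y0 + 1 * h2) with y by (unfold h2; ring).
    reflexivity. }
  assert (Eg0 : g 0 = E_f f (1/2) y0 A).
  { unfold g. replace (1/2 + 0 * h1) with (1/2) by ring. replace (y0 + 0 * h2) with y0 by ring. reflexivity. }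
  lra.
Qed.
End Main.

Theorem proposition3p10 (f f1 f2 : R -> R) (A : R) :
  0 < A -> in_F f f1 f2 ->
  (exists (d : R) (Ex Ey : R -> R -> R), 0 < d /\
     (forall x y, Rabs (x - 1/2) < d -> Rabs (y - sqrt 3 / 2) < d ->
        derivable_pt_lim (fun t => E_f f t y A) x (Ex x y) /\
        derivable_pt_lim (fun t => E_f f x t A) y (Ey x y)) /\
     derivable_pt_lim (fun t => Ex t (sqrt 3 / 2)) (1/2) (T_f f1 f2 A) /\
     derivable_pt_lim (fun t => Ey (1/2) t) (sqrt 3 / 2) (T_f f1 f2 A) /\
     derivable_pt_lim (fun t => Ex (1/2) t) (sqrt 3 / 2) 0 /\
     derivable_pt_lim (fun t => Ey t (sqrt 3 / 2)) (1/2) 0) /\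
  (0 < T_f f1 f2 A -> strict_local_min (fun x y => E_f f x y A) (1/2) (sqrt 3 / 2)) /\
  (T_f f1 f2 A < 0 -> strict_local_max (fun x y => E_f f x y A) (1/2) (sqrt 3 / 2)).
Proof.
  intros HA HF.
  destruct (in_F_bounds f f1 f2 HF) as [eta [C [R0 [Heta [HC [HR0 Hdec]]]]]].
  destruct HF as [Hd1 [Hd2 [Hc2 _]]].
  destruct (choose_K0 A R0 HA) as [K0 [HK1 HK0]].
  split; [|split].
  - exists (1/10), (fun x y => lattice_sum (T1 f1 A x y 1 0)), (fun x y => lattice_sum (T1 f1 A x y 0 1)).
    split. lra. split.
    + intros x y Hx Hy. eapply partA; eauto.
    + destruct (partB f f1 f2 A eta C R0 K0) as [B1 [B2 [B3 B4]]]; auto.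
  - intros HT. eapply localmin; eauto.
  - intros HT.
    set (nf := fun r => - f r). set (nf1 := fun r => - f1 r). set (nf2 := fun r => - f2 r).
    assert (Hdec' : forall r, R0 <= r -> Rabs (nf r) <= C * Rpower r (- (eta + 0)) /\
      Rabs (nf1 r) <= C * Rpower r (- (eta + 1)) /\ Rabs (nf2 r) <= C * Rpower r (- (eta + 2))).
    { intros r Hr. unfold nf, nf1, nf2. rewrite !Rabs_Ropp. auto. }
    assert (Hg1 : forall r, R0 <= r -> Rabs (f1 r) <= C * Rpower r (- (eta + INR 1))).
    { intros r Hr. replace (INR 1) with 1 by reflexivity. apply Hdec; auto. }
    assert (Hg2 : forall r, R0 <= r -> Rabs (f2 r) <= C * Rpower r (- (eta + INR 2))).
    { intros r Hr. replace (INR 2) with 2 by (simpl; ring). apply Hdec; auto. }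
    assert (HTn : T_f nf1 nf2 A = - T_f f1 f2 A).
    { rewrite !Tf_eq.
      destruct (lin1 _ (-1) (cvA f1 A eta C R0 K0 HA HC Heta HK1 Hg1 HK0 0 2 eq_refl)) as [_ E1].
      destruct (lin1 _ (-1) (cvB f2 A eta C R0 K0 HA HC Heta HK1 Hg2 HK0 0 4 eq_refl)) as [_ E2].
      rewrite (lattice_sum_ext (fun m n => wt nf1 A m n * mono 0 2 m n) (fun m n => -1 * (wt f1 A m n * mono 0 2 m n))).
      rewrite (lattice_sum_ext (fun m n => wt nf2 A m n * mono 0 4 m n) (fun m n => -1 * (wt f2 A m n * mono 0 4 m n))).
      rewrite E1, E2. ring.
      intros; unfold wt, nf2; ring. intros; unfold wt, nf1; ring. }
    assert (Hmin : strict_local_min (fun x y => E_f nf x y A) (1/2) (sqrt 3 / 2)).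
    { apply (localmin nf nf1 nf2 A eta C R0 K0); auto.
      - intros r Hr. apply derivable_pt_lim_opp. auto.
      - intros r Hr. apply derivable_pt_lim_opp. auto.
      - intros r Hr. apply continuity_pt_opp. auto.
      - lra. }
    destruct Hmin as [d [Hd Hmin]].
    exists (Rmin d (1/10)). split. apply Rmin_case; lra.
    intros x y Hx Hy Hy0 Hne.
    assert (Hx1 : Rabs (x - 1/2) < d) by (eapply Rlt_le_trans; [exact Hx|apply Rmin_l]).
    assert (Hy1 : Rabs (y - sqrt 3 / 2) < d) by (eapply Rlt_le_trans; [exact Hy|apply Rmin_l]).
    assert (Hx2 : Rabs (x - 1/2) < 1/10) by (eapply Rlt_le_trans; [exact Hx|apply Rmin_r]).
    assert (Hy2 : Rabs (y - sqrt 3 / 2) < 1/10) by (eapply Rlt_le_trans; [exact Hy|apply Rmin_r]).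
    specialize (Hmin x y Hx1 Hy1 Hy0 Hne). cbv beta in *.
    assert (Eneg : forall u v, rb u v -> E_f nf u v A = - E_f f u v A).
    { intros u v Huv. unfold E_f.
      destruct (lin1 _ (-1) (cvT0 f f1 f2 A eta C R0 K0 HA HC Heta HK1 Hdec HK0 u v Huv)) as [_ E].
      rewrite (lattice_sum_ext _ (fun m n => -1 * T0 f A u v m n)). rewrite E. unfold T0, Q. ring.
      intros. unfold nf, T0, Q. ring. }
    pose proof sqrt3_bounds.
    rewrite !Eneg in Hmin. lra.
    apply rb_of; lra. apply rb_of; rewrite Rminus_diag, Rabs_R0; lra.
Qed.
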